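(* Let $a\in(0,1)$. As $n\to\infty$, $\mu\to0$ with $n\mu\to\theta\in[0,\infty)$ and $|\mathcal{S}|\mu\to\eta\in[0,\infty)$, $$\mathbb{E}\Big[\sum_{i\in\mathcal{S}}\delta_{n^{-1}B_i^{n,\mu}}\big((a,1)\big)\Big]\longrightarrow 2\eta(a^{-1}-1).$$
   Context: Basic model. Let $\mathcal{N}=\{A,C,G,T\}$, $\mathcal{S}$ a finite nonempty set of sites. One initial cell with genome $u=(u_i)_{i\in\mathcal{S}}\in\mathcal{N}^{\mathcal{S}}$; each cell lives an independent Exp(1) time and is then replaced by two daughters. At a division of a cell with genome $v$, conditionally on $v$ the daughters' entries $V_i^{(r)}$ ($i\in\mathcal{S}$, $r\in\{1,2\}$) are independent with $\mathbb{P}[V_i^{(r)}=\psi\mid v]=\mu/3$ for $\psi\neq v_i$ and $1-\mu$ for $\psi=v_i$; different divisions mutate independently. $\sigma_n$ = first time there are $n$ alive cells; $B_i^{n,\mu}$ = number of cells alive at $\sigma_n$ whose nucleotide at site $i$ differs from $u_i$. The limit is along arbitrary sequences of $(n,\mu,\mathcal{S})$ with the stated asymptotics. *)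

(* Defs.v *)
From Stdlib Require Import Reals List.
Import ListNotations.
Open Scope R_scope.

Inductive Nuc : Type := NA | NC | NG | NT.

Definition nuc_eqb (x y : Nuc) : bool :=
  match x, y with
  | NA, NA | NC, NC | NG, NG | NT, NT => true
  | _, _ => false
  end.

Definition all_nucs : list Nuc := [NA; NC; NG; NT].

(* A genome on the site set S = {0, ..., m-1} is a list of length m;
   entry i is the nucleotide at site i. *)
Fixpoint all_genomes (m : nat) : list (list Nuc) :=
  match m with
  | O => [nil]
  | S m' => flat_map (fun x => map (fun g => x :: g) (all_genomes m')) all_nucs
  end.

Definition rsum {A : Type} (l : list A) (g : A -> R) : R :=
  fold_right (fun x acc => g x + acc) 0 l.

Definition site_prob (mu : R) (x y : Nuc) : R :=
  if nuc_eqb x y then 1 - mu else mu / 3.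

(* Probability that a daughter of a cell with genome v has genome w
   (entries independent across sites). *)
Fixpoint genome_prob (mu : R) (v w : list Nuc) : R :=
  match v, w with
  | x :: v', y :: w' => site_prob mu x y * genome_prob mu v' w'
  | _, _ => 1
  end.

Definition divide_at (cells : list (list Nuc)) (j : nat) (w1 w2 : list Nuc)
  : list (list Nuc) :=
  firstn j cells ++ w1 :: w2 :: skipn (S j) cells.

(* Expectation of f(population) after r further divisions, for the
   population process observed at its division times (the jump chain of the
   Yule process with Exp(1) lifetimes): at each division the dividing cell is
   uniform among the alive cells, and the two daughters mutate independently. *)
Fixpoint expect_after (r : nat) (mu : R) (m : nat)
         (f : list (list Nuc) -> R) (cells : list (list Nuc)) : R :=
  match r with
  | O => f cells
  | S r' =>
      / INR (length cells) *
      rsum (seq 0 (length cells)) (fun j =>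
        let v := nth j cells nil in
        rsum (all_genomes m) (fun w1 =>
          rsum (all_genomes m) (fun w2 =>
            genome_prob mu v w1 * genome_prob mu v w2 *
            expect_after r' mu m f (divide_at cells j w1 w2))))
  end.

Definition B_count (u : list Nuc) (i : nat) (cells : list (list Nuc)) : nat :=
  length (filter (fun c => negb (nuc_eqb (nth i c NA) (nth i u NA))) cells).

Definition dirac_open (a x : R) : R :=
  if Rlt_dec a x then (if Rlt_dec x 1 then 1 else 0) else 0.

Definition stat (a : R) (n m : nat) (u : list Nuc) (cells : list (list Nuc)) : R :=
  rsum (seq 0 m) (fun i => dirac_open a (INR (B_count u i cells) / INR n)).

(* E[ sum_{i in S} delta_{n^{-1} B_i^{n,mu}}((a,1)) ]: at sigma_n exactly
   n-1 divisions have occurred, starting from one cell with genome u. *)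
Definition expected_stat (a : R) (n : nat) (mu : R) (m : nat) (u : list Nuc) : R :=
  expect_after (n - 1) mu m (stat a n m u) [u].

(* Main.v *)
Require Import Defs.
From Stdlib Require Import Reals Lra Lia List ZArith.
Import ListNotations.
Open Scope R_scope.

Lemma rsum_nil {A} (g : A -> R) : rsum [] g = 0.
Proof. reflexivity. Qed.
Lemma rsum_cons {A} (x : A) l g : rsum (x :: l) g = g x + rsum l g.
Proof. reflexivity. Qed.
Lemma rsum_app {A} (l1 l2 : list A) g : rsum (l1 ++ l2) g = rsum l1 g + rsum l2 g.
Proof. induction l1; simpl; [lra|]. unfold rsum in *; simpl. rewrite IHl1; lra. Qed.
Lemma rsum_ext_in {A} (l : list A) f g : (forall x, In x l -> f x = g x) -> rsum l f = rsum l g.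
Proof. induction l; intros H; simpl; auto. unfold rsum in *; simpl. rewrite H by (left; auto).
 rewrite IHl; auto. intros; apply H; right; auto. Qed.
Lemma rsum_plus {A} (l : list A) f g : rsum l (fun x => f x + g x) = rsum l f + rsum l g.
Proof. induction l; unfold rsum in *; simpl; [lra|]. rewrite IHl; lra. Qed.
Lemma rsum_scal {A} (l : list A) c f : rsum l (fun x => c * f x) = c * rsum l f.
Proof. induction l; unfold rsum in *; simpl; [lra|]. rewrite IHl; lra. Qed.
Lemma rsum_swap {A B} (l1 : list A) (l2 : list B) f :
  rsum l1 (fun x => rsum l2 (fun y => f x y)) = rsum l2 (fun y => rsum l1 (fun x => f x y)).
Proof. induction l1; simpl.
 - induction l2; unfold rsum in *; simpl; auto. rewrite <- IHl2; lra.
 - change (rsum l2 (fun y => f a y) + rsum l1 (fun x => rsum l2 (fun y => f x y)) =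
     rsum l2 (fun y => f a y + rsum l1 (fun x => f x y))).
   rewrite rsum_plus, IHl1; auto. Qed.
Lemma rsum_le {A} (l : list A) f g : (forall x, In x l -> f x <= g x) -> rsum l f <= rsum l g.
Proof. induction l; intros H; unfold rsum in *; simpl; [lra|].
 apply Rplus_le_compat; [apply H; left; auto| apply IHl; intros; apply H; right; auto]. Qed.
Lemma rsum_map {A B} (h : A -> B) l g : rsum (map h l) g = rsum l (fun x => g (h x)).
Proof. induction l; unfold rsum in *; simpl; auto. rewrite IHl; auto. Qed.
Lemma rsum_flat_map {A B} (F : A -> list B) l g : rsum (flat_map F l) g = rsum l (fun x => rsum (F x) g).
Proof. induction l; simpl; auto. rewrite rsum_app, IHl; auto. Qed.
Lemma rsum_const {A} (l : list A) c : rsum l (fun _ => c) = INR (length l) * c.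
Proof. induction l; unfold rsum in *; simpl length; [simpl; lra|]. rewrite S_INR. simpl. rewrite IHl; lra. Qed.
Lemma rsum_abs {A} (l : list A) f : Rabs (rsum l f) <= rsum l (fun x => Rabs (f x)).
Proof. induction l; unfold rsum in *; simpl. rewrite Rabs_R0; lra.
 eapply Rle_trans; [apply Rabs_triang|]. lra. Qed.
Lemma rsum_nonneg {A} (l : list A) f : (forall x, In x l -> 0 <= f x) -> 0 <= rsum l f.
Proof. intros H. replace 0 with (rsum l (fun _ => 0)). apply rsum_le; auto.
 rewrite rsum_const; lra. Qed.

Definition qq (mu : R) := 1 - mu / 3.
Definition Mpart (mu : R) (g : nat -> R) (b : nat) :=
  (1 - qq mu)^2 * g (b - 1)%nat + 2 * qq mu * (1 - qq mu) * g b + qq mu ^ 2 * g (S b).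
Definition Npart (mu : R) (g : nat -> R) (b : nat) :=
  (1 - mu)^2 * g b + 2 * mu * (1 - mu) * g (S b) + mu ^ 2 * g (S (S b)).
Definition wt (k b : nat) := INR (Nat.min b k) / INR k.
Definition T (mu : R) (k : nat) (g : nat -> R) (b : nat) :=
  wt k b * Mpart mu g b + (1 - wt k b) * Npart mu g b.
Fixpoint Viter (mu : R) (k r : nat) (g : nat -> R) : nat -> R :=
  match r with O => g | S r' => T mu k (Viter mu (S k) r' g) end.

Lemma all_genomes_S m : all_genomes (S m) =
  flat_map (fun x => map (fun g => x :: g) (all_genomes m)) all_nucs.
Proof. reflexivity. Qed.

Lemma site_sum1 mu x : rsum all_nucs (fun y => site_prob mu x y) = 1.
Proof. destruct x; unfold rsum, site_prob; simpl; lra. Qed.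

Lemma gp_sum1 mu v : rsum (all_genomes (length v)) (fun w => genome_prob mu v w) = 1.
Proof. induction v as [|x v IH]. unfold rsum; simpl; lra.
 change (length (x :: v)) with (S (length v)). rewrite all_genomes_S, rsum_flat_map.
 rewrite <- (site_sum1 mu x). apply rsum_ext_in; intros y _.
 rewrite rsum_map. cbn -[rsum all_nucs all_genomes]. rewrite rsum_scal. change (genome_prob mu v) with (fun w => genome_prob mu v w). rewrite IH; lra. Qed.

Lemma gp_marg mu v i (K : Nuc -> R) : (i < length v)%nat ->
  rsum (all_genomes (length v)) (fun w => genome_prob mu v w * K (nth i w NA)) =
  rsum all_nucs (fun y => site_prob mu (nth i v NA) y * K y).
Proof. revert i; induction v as [|x v IH]; intros i Hi; simpl in Hi; [lia|].
 change (length (x :: v)) with (S (length v)). rewrite all_genomes_S, rsum_flat_map. destruct i as [|i].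
 - apply rsum_ext_in; intros y _. rewrite rsum_map. cbn -[rsum all_nucs all_genomes].
   transitivity (rsum (all_genomes (length v)) (fun w => (site_prob mu x y * K y) * genome_prob mu v w)).
   apply rsum_ext_in; intros; lra. rewrite rsum_scal, gp_sum1; lra.
 - transitivity (rsum all_nucs (fun y => site_prob mu x y * rsum all_nucs (fun z => site_prob mu (nth i v NA) z * K z))).
   + apply rsum_ext_in; intros y _. rewrite rsum_map. cbn -[rsum all_nucs all_genomes].
     rewrite <- IH by lia. rewrite <- rsum_scal. apply rsum_ext_in; intros; lra.
   + transitivity (rsum all_nucs (fun y => rsum all_nucs (fun z => site_prob mu (nth i v NA) z * K z) * site_prob mu x y)).
     apply rsum_ext_in; intros; lra. rewrite rsum_scal, site_sum1. change (nth (S i) (x :: v) NA) with (nth i v NA); lra.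
Qed.

Lemma all_genomes_length m w : In w (all_genomes m) -> length w = m.
Proof. revert w; induction m; intros w H.
 destruct H as [<-|[]]; auto.
 rewrite all_genomes_S in H. apply in_flat_map in H. destruct H as [x [_ H]]. apply in_map_iff in H.
 destruct H as [g [<- Hg]]. simpl; f_equal; auto. Qed.

Section Red.
Variables (mu : R) (m : nat) (u : list Nuc) (i : nat).
Definition ux := nth i u NA.
Definition bm (y : Nuc) : nat := if nuc_eqb y ux then 0%nat else 1%nat.

Lemma site_formula x (K : nat -> R) :
  rsum all_nucs (fun y => site_prob mu x y * K (bm y)) =
  if nuc_eqb x ux then (1 - mu) * K 0%nat + mu * K 1%nat
  else (mu/3) * K 0%nat + (1 - mu/3) * K 1%nat.
Proof. unfold bm; destruct x, ux; unfold rsum, site_prob; simpl; lra. Qed.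

Lemma B_count_bm cs : B_count u i cs = fold_right (fun c acc => (bm (nth i c NA) + acc)%nat) 0%nat cs.
Proof. induction cs as [|c cs IH]; simpl; auto. unfold B_count in *. simpl.
 unfold bm, ux. destruct (nuc_eqb (nth i c NA) (nth i u NA)); simpl; auto. Qed.

Lemma B_count_app l1 l2 : B_count u i (l1 ++ l2) = (B_count u i l1 + B_count u i l2)%nat.
Proof. rewrite !B_count_bm. induction l1; simpl; auto. rewrite IHl1; lia. Qed.

Lemma cells_split (cells : list (list Nuc)) j : (j < length cells)%nat ->
  cells = firstn j cells ++ nth j cells nil :: skipn (S j) cells.
Proof. revert j; induction cells as [|c cs IH]; intros j Hj; simpl in Hj; [lia|].
 destruct j; simpl; auto. f_equal. apply IH; lia. Qed.

Lemma cnt_divide cells j w1 w2 : (j < length cells)%nat ->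
  (B_count u i (divide_at cells j w1 w2) + bm (nth i (nth j cells nil) NA) =
   B_count u i cells + bm (nth i w1 NA) + bm (nth i w2 NA))%nat.
Proof. intros Hj. unfold divide_at. pose proof (cells_split cells j Hj) as Heq.
 set (A := firstn j cells) in *. set (Bs := skipn (S j) cells) in *.
 set (v := nth j cells nil) in *. rewrite Heq at 1.
 rewrite !B_count_app. rewrite !B_count_bm. simpl. lia. Qed.

Lemma B_count_le cells : (B_count u i cells <= length cells)%nat.
Proof. unfold B_count. apply filter_length_le. Qed.

Lemma length_divide cells j w1 w2 : (j < length cells)%nat ->
  length (divide_at cells j w1 w2) = S (length cells).
Proof. intros Hj. unfold divide_at. rewrite length_app. cbn [length].
 rewrite length_firstn, length_skipn. lia. Qed.


Lemma cnt_ge cells j : (j < length cells)%nat ->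
  (bm (nth i (nth j cells nil) NA) <= B_count u i cells)%nat.
Proof. intros Hj. pose proof (cells_split cells j Hj) as Heq.
 set (A := firstn j cells) in *. set (Bs := skipn (S j) cells) in *.
 set (v := nth j cells nil) in *. rewrite Heq.
 rewrite !B_count_app. rewrite !B_count_bm. simpl. lia. Qed.

Lemma double_marg v (Phi : nat -> nat -> R) : length v = m -> (i < m)%nat ->
  rsum (all_genomes m) (fun w1 => rsum (all_genomes m) (fun w2 =>
     genome_prob mu v w1 * genome_prob mu v w2 * Phi (bm (nth i w1 NA)) (bm (nth i w2 NA)))) =
  if nuc_eqb (nth i v NA) ux then
    (1 - mu) * ((1 - mu) * Phi 0%nat 0%nat + mu * Phi 0%nat 1%nat) + mu * ((1 - mu) * Phi 1%nat 0%nat + mu * Phi 1%nat 1%nat)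
  else (mu/3) * ((mu/3) * Phi 0%nat 0%nat + (1 - mu/3) * Phi 0%nat 1%nat) + (1 - mu/3) * ((mu/3) * Phi 1%nat 0%nat + (1 - mu/3) * Phi 1%nat 1%nat).
Proof. intros Hv Hi. subst m.
 transitivity (rsum (all_genomes (length v)) (fun w1 => genome_prob mu v w1 *
   rsum all_nucs (fun y => site_prob mu (nth i v NA) y * Phi (bm (nth i w1 NA)) (bm y)))).
 { apply rsum_ext_in; intros w1 _. rewrite <- gp_marg by auto. rewrite <- rsum_scal.
   apply rsum_ext_in; intros; lra. }
 rewrite (gp_marg mu v i (fun y1 => rsum all_nucs (fun y => site_prob mu (nth i v NA) y * Phi (bm y1) (bm y)))) by auto.
 rewrite (site_formula (nth i v NA) (fun z => rsum all_nucs (fun y => site_prob mu (nth i v NA) y * Phi z (bm y)))).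
 rewrite !(site_formula (nth i v NA) (fun z => Phi _ z)).
 destruct (nuc_eqb (nth i v NA) ux); lra.
Qed.

Lemma rsum_seq_nth {A} (l : list A) d (F : A -> R) :
  rsum (seq 0 (length l)) (fun j => F (nth j l d)) = rsum l F.
Proof. induction l as [|x l IH]; auto.
 change (length (x :: l)) with (S (length l)).
 change (seq 0 (S (length l))) with (0 :: seq 1 (length l))%nat.
 rewrite !rsum_cons. rewrite <- seq_shift, rsum_map. cbn [nth]. rewrite IH. reflexivity. Qed.

Lemma rsum_count (cells : list (list Nuc)) X Y :
  rsum cells (fun c => if nuc_eqb (nth i c NA) ux then Y else X) =
  INR (B_count u i cells) * X + (INR (length cells) - INR (B_count u i cells)) * Y.
Proof. induction cells as [|c cs IH]. unfold rsum; simpl; lra.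
 rewrite rsum_cons, IH. rewrite !B_count_bm. simpl length. rewrite S_INR.
 cbn [fold_right]. rewrite plus_INR. unfold bm.
 rewrite <- !B_count_bm.
 destruct (nuc_eqb (nth i c NA) ux); simpl; lra. Qed.

Lemma reduction r : forall cells h, (1 <= length cells)%nat ->
  Forall (fun c => length c = m) cells -> (i < m)%nat -> (0 <= mu <= 1) ->
  expect_after r mu m (fun cs => h (B_count u i cs)) cells =
  Viter mu (length cells) r h (B_count u i cells).
Proof. induction r as [|r IH]; intros cells h HL HF Hi Hmu; [reflexivity|].
 cbn [expect_after Viter].
 set (L := length cells) in *. set (b := B_count u i cells).
 set (H := Viter mu (S L) r h).
 transitivity (/ INR L * rsum (seq 0 L) (fun j =>
    (fun v => if nuc_eqb (nth i v NA) ux then Npart mu H b else Mpart mu H b) (nth j cells nil))).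
 { f_equal. apply rsum_ext_in. intros j Hj. apply in_seq in Hj.
   assert (Hj' : (j < L)%nat) by lia.
   assert (Hvl : length (nth j cells nil) = m).
   { rewrite Forall_forall in HF. apply HF. apply nth_In. auto. }
   pose proof (cnt_ge cells j Hj') as Hge.
   transitivity (rsum (all_genomes m) (fun w1 => rsum (all_genomes m) (fun w2 =>
     genome_prob mu (nth j cells nil) w1 * genome_prob mu (nth j cells nil) w2 *
     (fun z1 z2 => H ((b - bm (nth i (nth j cells nil) NA)) + z1 + z2)%nat) (bm (nth i w1 NA)) (bm (nth i w2 NA))))).
   { apply rsum_ext_in; intros w1 Hw1. apply rsum_ext_in; intros w2 Hw2. f_equal.
     apply all_genomes_length in Hw1. apply all_genomes_length in Hw2.
     rewrite IH; auto.
     - unfold H. rewrite length_divide by auto. f_equal.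
       pose proof (cnt_divide cells j w1 w2 Hj'). unfold b. lia.
     - rewrite length_divide by auto. lia.
     - unfold divide_at. pose proof HF as HF2.
       rewrite <- (firstn_skipn j cells) in HF2. apply Forall_app in HF2. destruct HF2 as [HF1 HF2].
       apply Forall_app; split; auto. constructor; auto. constructor; auto.
       rewrite <- (firstn_skipn 1 (skipn j cells)) in HF2. rewrite skipn_skipn in HF2.
       apply Forall_app in HF2. replace (1 + j)%nat with (S j) in HF2 by lia. tauto. }
   etransitivity; [apply (double_marg _ (fun z1 z2 => H ((b - bm (nth i (nth j cells nil) NA)) + z1 + z2)%nat)); auto|].
   cbv beta.
   destruct (nuc_eqb (nth i (nth j cells nil) NA) ux) eqn:E.
   - assert (Hb : bm (nth i (nth j cells nil) NA) = 0%nat) by (unfold bm; rewrite E; auto).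
     rewrite Hb. rewrite Nat.sub_0_r, !Nat.add_0_r.
     replace (b + 1 + 1)%nat with (S (S b)) by lia. replace (b + 1)%nat with (S b) by lia.
     unfold Npart. lra.
   - assert (Hb : bm (nth i (nth j cells nil) NA) = 1%nat) by (unfold bm; rewrite E; auto).
     rewrite Hb in *. unfold Mpart, qq.
     replace (b - 1 + 1 + 1)%nat with (S b) by lia.
     replace (b - 1 + 0 + 1)%nat with b by lia. replace (b - 1 + 1 + 0)%nat with b by lia.
     replace (b - 1 + 0 + 0)%nat with (b - 1)%nat by lia. lra. }
 unfold L. rewrite (rsum_seq_nth cells nil (fun v => if nuc_eqb (nth i v NA) ux then Npart mu H b else Mpart mu H b)).
 rewrite rsum_count. fold b. fold L.
 unfold T, wt. rewrite Nat.min_l by (apply B_count_le).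
 assert (0 < INR L) by (apply lt_0_INR; lia). field. lra.
Qed.
End Red.

Lemma expect_after_rsum {A} r mu m (l : list A) (F : A -> list (list Nuc) -> R) : forall cells,
  expect_after r mu m (fun cs => rsum l (fun x => F x cs)) cells =
  rsum l (fun x => expect_after r mu m (F x) cells).
Proof. induction r as [|r IH]; intros cells; [reflexivity|]. cbn [expect_after].
 transitivity (/ INR (length cells) * rsum l (fun x => rsum (seq 0 (length cells)) (fun j =>
   rsum (all_genomes m) (fun w1 => rsum (all_genomes m) (fun w2 =>
     genome_prob mu (nth j cells []) w1 * genome_prob mu (nth j cells []) w2 *
     expect_after r mu m (F x) (divide_at cells j w1 w2)))))).
 - f_equal. symmetry. rewrite rsum_swap. apply rsum_ext_in; intros j _.
   rewrite rsum_swap. apply rsum_ext_in; intros w1 _.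
   rewrite rsum_swap. apply rsum_ext_in; intros w2 _.
   rewrite IH. rewrite <- rsum_scal. reflexivity.
 - rewrite <- rsum_scal. reflexivity.
Qed.

Lemma nuc_eqb_refl x : nuc_eqb x x = true.
Proof. destruct x; reflexivity. Qed.

Definition fdir (a : R) (n : nat) (b : nat) : R := dirac_open a (INR b / INR n).

Lemma expected_stat_eq a n mu m u : length u = m -> 0 <= mu <= 1 ->
  expected_stat a n mu m u = INR m * Viter mu 1 (n - 1) (fdir a n) 0%nat.
Proof. intros Hu Hmu. unfold expected_stat, stat.
 rewrite expect_after_rsum.
 replace (INR m) with (INR (length (seq 0 m))) by (rewrite length_seq; auto).
 rewrite <- (rsum_const (seq 0 m)).
 apply rsum_ext_in. intros i Hi. apply in_seq in Hi.
 etransitivity; [apply (reduction mu m u i (n - 1) [u] (fdir a n)); simpl; auto; try lia|].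
 f_equal. unfold B_count. simpl. unfold ux. rewrite nuc_eqb_refl. reflexivity.
Qed.

Lemma wt_bounds k b : (1 <= k)%nat -> 0 <= wt k b <= 1.
Proof. intros Hk. unfold wt. assert (0 < INR k) by (apply lt_0_INR; lia).
 split. apply Rmult_le_pos; [apply pos_INR| left; apply Rinv_0_lt_compat; auto].
 apply Rmult_le_reg_r with (INR k); auto. unfold Rdiv. rewrite Rmult_assoc, Rinv_l by lra.
 rewrite Rmult_1_r, Rmult_1_l. apply le_INR. lia. Qed.

Lemma wt_le k b : (1 <= k)%nat -> wt k b <= INR b / INR k.
Proof. intros Hk. unfold wt. assert (0 < INR k) by (apply lt_0_INR; lia).
 unfold Rdiv. apply Rmult_le_compat_r. left; apply Rinv_0_lt_compat; auto.
 apply le_INR; lia. Qed.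

Lemma wt_step k b : (1 <= k)%nat -> 0 <= wt k (S b) - wt k b <= / INR k.
Proof. intros Hk. unfold wt. assert (0 < INR k) by (apply lt_0_INR; lia).
 assert (Hm : (Nat.min (S b) k = Nat.min b k \/ Nat.min (S b) k = S (Nat.min b k))%nat) by lia.
 assert (0 < / INR k) by (apply Rinv_0_lt_compat; auto).
 destruct Hm as [Hm|Hm]; rewrite Hm. split; unfold Rdiv; lra.
 rewrite S_INR. split; unfold Rdiv; rewrite Rmult_plus_distr_r; try lra. Qed.

Lemma wt_0 k : wt k 0 = 0.
Proof. unfold wt. simpl. unfold Rdiv; lra. Qed.

Lemma qq_bounds mu : 0 <= mu <= 1 -> 2/3 <= qq mu <= 1.
Proof. unfold qq; lra. Qed.

Lemma T_ext mu k g g' : (forall b, g b = g' b) -> forall b, T mu k g b = T mu k g' b.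
Proof. intros H b. unfold T, Mpart, Npart. rewrite !H. reflexivity. Qed.

Lemma T_mono mu k g g' : 0 <= mu <= 1 -> (1 <= k)%nat -> (forall b, g b <= g' b) ->
  forall b, T mu k g b <= T mu k g' b.
Proof. intros Hmu Hk H b. unfold T, Mpart, Npart.
 pose proof (wt_bounds k b Hk). pose proof (qq_bounds mu Hmu).
 set (w := wt k b) in *. set (q := qq mu) in *.
 apply Rplus_le_compat; apply Rmult_le_compat_l; try lra.
 - repeat apply Rplus_le_compat; apply Rmult_le_compat_l; auto; try nra.
 - repeat apply Rplus_le_compat; apply Rmult_le_compat_l; auto; try nra.
Qed.

Lemma T_lin mu k al be g g' b :
  T mu k (fun x => al * g x + be * g' x) b = al * T mu k g b + be * T mu k g' b.
Proof. unfold T, Mpart, Npart. ring. Qed.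

Lemma T_const mu k c b : T mu k (fun _ => c) b = c.
Proof. unfold T, Mpart, Npart. ring. Qed.

Lemma Viter_ext mu r : forall k g g', (forall b, g b = g' b) -> forall b, Viter mu k r g b = Viter mu k r g' b.
Proof. induction r; intros k g g' H b; simpl; auto. apply T_ext. intros; apply IHr; auto. Qed.

Lemma Viter_mono mu r : forall k g g', 0 <= mu <= 1 -> (1 <= k)%nat -> (forall b, g b <= g' b) ->
  forall b, Viter mu k r g b <= Viter mu k r g' b.
Proof. induction r; intros k g g' Hmu Hk H b; simpl; auto. apply T_mono; auto.
 Qed.

Lemma Viter_lin mu r : forall k al be g g' b,
  Viter mu k r (fun x => al * g x + be * g' x) b = al * Viter mu k r g b + be * Viter mu k r g' b.
Proof. induction r; intros k al be g g' b; simpl; auto.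
 rewrite <- T_lin. apply T_ext. intros; apply IHr. Qed.

Lemma Viter_const mu r : forall k c b, Viter mu k r (fun _ => c) b = c.
Proof. induction r; intros k c b; simpl; auto.
 rewrite (T_ext mu k _ (fun _ => c)); [apply T_const|]. intros; apply IHr. Qed.

Lemma Viter_last mu r : forall k g b, Viter mu k (S r) g b = Viter mu k r (T mu (k + r) g) b.
Proof. induction r; intros k g b. simpl. rewrite Nat.add_0_r. reflexivity.
 change (Viter mu k (S (S r)) g b) with (T mu k (Viter mu (S k) (S r) g) b).
 change (Viter mu k (S r) (T mu (k + S r) g) b) with (T mu k (Viter mu (S k) r (T mu (k + S r) g)) b).
 apply T_ext. intros x. rewrite IHr. replace (S k + r)%nat with (k + S r)%nat by lia. reflexivity. Qed.

(* V n j = value at population j of chain ending at n *)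
Definition V mu n j g := Viter mu j (n - j) g.

Lemma V_step mu n j g b : (j < n)%nat -> V mu n j g b = T mu j (V mu n (S j) g) b.
Proof. intros H. unfold V. replace (n - j)%nat with (S (n - S j)) by lia. reflexivity. Qed.

Lemma V_end mu n g b : V mu n n g b = g b.
Proof. unfold V. rewrite Nat.sub_diag. reflexivity. Qed.

Definition Dl mu n g l := (mu^2 - 2*mu) * V mu n l g 0%nat + 2*mu*(1-mu) * V mu n l g 1%nat + mu^2 * V mu n l g 2%nat.

Lemma telescope mu n g d : forall j, (1 <= j)%nat -> (n - j = d)%nat -> (j <= n)%nat ->
  V mu n j g 0%nat = g 0%nat + rsum (seq (S j) d) (Dl mu n g).
Proof. induction d as [|d IH]; intros j Hj Hd Hjn.
 - replace j with n by lia. rewrite V_end. simpl. unfold rsum; simpl; lra.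
 - rewrite V_step by lia. unfold T. rewrite wt_0.
   change (seq (S j) (S d)) with (S j :: seq (S (S j)) d).
   rewrite rsum_cons. unfold Dl at 1, Npart.
   rewrite (IH (S j)) by lia. ring.
Qed.

Definition Hs (j n : nat) : R := rsum (seq (S j) (n - j)) (fun i => / INR i).
Definition Hn (n : nat) : R := Hs 0 n.

Lemma Hs_step j n : (j < n)%nat -> Hs j n = / INR (S j) + Hs (S j) n.
Proof. intros H. unfold Hs. replace (n - j)%nat with (S (n - S j)) by lia. reflexivity. Qed.

Lemma Hs_nil j n : (n <= j)%nat -> Hs j n = 0.
Proof. intros H. unfold Hs. replace (n - j)%nat with 0%nat by lia. reflexivity. Qed.

Lemma Hs_nonneg j n : 0 <= Hs j n.
Proof. unfold Hs. apply rsum_nonneg. intros x Hx. apply in_seq in Hx.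
 left. apply Rinv_0_lt_compat. apply lt_0_INR. lia. Qed.

Lemma Hs_le_S j n : Hs (S j) n <= Hs j n.
Proof. destruct (Nat.lt_ge_cases j n). rewrite (Hs_step j n) by auto.
 assert (0 < / INR (S j)) by (apply Rinv_0_lt_compat; apply lt_0_INR; lia). lra.
 rewrite !Hs_nil by lia. lra. Qed.

Lemma Hs_le_Hn j n : Hs j n <= Hn n.
Proof. induction j. unfold Hn; lra. pose proof (Hs_le_S j n). unfold Hn in *. lra. Qed.

Lemma mul_nn_np x y : 0 <= x -> y <= 0 -> x * y <= 0.
Proof. intros; nra. Qed.

Lemma T_upper mu k g b : 0 <= mu <= 1 -> (1 <= k)%nat -> (forall x, g x <= g (S x)) ->
  T mu k g b <= g b + (INR b / INR k) * (g (S b) - g b) + 2 * mu * (g (S (S b)) - g b).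
Proof. intros Hmu Hk Hg.
 pose proof (wt_bounds k b Hk) as Hw. pose proof (wt_le k b Hk) as Hw2. pose proof (qq_bounds mu Hmu).
 assert (H1 : g (b - 1)%nat <= g b). { destruct b. simpl; lra. replace (S b - 1)%nat with b by lia. apply Hg. }
 pose proof (Hg b). pose proof (Hg (S b)).
 assert (HM : Mpart mu g b <= g (S b)).
 { unfold Mpart. set (q := qq mu) in *.
   assert ((1-q)^2 * (g (b-1)%nat - g (S b)) <= 0) by (apply mul_nn_np; nra).
   assert (2*q*(1-q) * (g b - g (S b)) <= 0). { apply mul_nn_np; nra. }
   nra. }
 assert (HN : Npart mu g b <= g b + 2 * mu * (g (S (S b)) - g b)).
 { unfold Npart.
   assert (0 <= 2*mu*(1-mu) * (g (S (S b)) - g (S b))) by (apply Rmult_le_pos; nra).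
   assert (0 <= mu^2 * (g (S (S b)) - g b)) by (apply Rmult_le_pos; nra).
   nra. }
 unfold T. set (w := wt k b) in *.
 assert (w * Mpart mu g b + (1 - w) * Npart mu g b <= w * g (S b) + (1-w) * (g b + 2 * mu * (g (S (S b)) - g b))).
 { apply Rplus_le_compat; apply Rmult_le_compat_l; lra. }
 assert (w * (g (S b) - g b) <= INR b / INR k * (g (S b) - g b)).
 { apply Rmult_le_compat_r; lra. }
 assert (0 <= w * (2 * mu * (g (S (S b)) - g b))) by (apply Rmult_le_pos; [lra| apply Rmult_le_pos; lra]).
 unfold T in *. lra.
Qed.

Definition Phi (a mu H : R) (n j b : nat) : R :=
  / a^2 * (INR b * (INR b + 1) / (INR j * (INR j + 1)) + 8 * mu * Hs j n * INR b / INR j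
           + 12 * mu / (INR j + 1) + 32 * mu^2 * H * Hs j n).

Lemma Phi_mono a mu H n j b : 0 < a -> 0 <= mu -> 0 <= H -> (1 <= j)%nat -> Phi a mu H n j b <= Phi a mu H n j (S b).
Proof. intros Ha Hmu HH Hj. unfold Phi. rewrite S_INR.
 assert (0 < INR j) by (apply lt_0_INR; lia). pose proof (pos_INR b). pose proof (Hs_nonneg j n).
 apply Rmult_le_compat_l. left; apply Rinv_0_lt_compat; nra.
 unfold Rdiv. apply Rplus_le_compat_r. apply Rplus_le_compat_r.
 assert (0 < / (INR j * (INR j + 1))) by (apply Rinv_0_lt_compat; nra).
 assert (0 < / INR j) by (apply Rinv_0_lt_compat; nra).
 apply Rplus_le_compat. apply Rmult_le_compat_r; nra.
 apply Rmult_le_compat_r; try lra. apply Rmult_le_compat_l; nra.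
Qed.

Lemma phi_alg s mu H h J B : 0 < s -> 0 <= mu -> 1 <= J -> 0 <= B -> 0 <= h <= H ->
  let P1 := fun x => s * (x * (x + 1) / ((J + 1) * (J + 1 + 1)) + 8 * mu * h * x / (J + 1)
                          + 12 * mu / (J + 1 + 1) + 32 * mu^2 * H * h) in
  P1 B + (B / J) * (P1 (B + 1) - P1 B) + 2 * mu * (P1 (B + 1 + 1) - P1 B) <=
  s * (B * (B + 1) / (J * (J + 1)) + 8 * mu * (/ (J + 1) + h) * B / J + 12 * mu / (J + 1)
       + 32 * mu^2 * H * (/ (J + 1) + h)).
Proof. intros Hs Hmu HJ HB Hh P1. unfold P1.
 match goal with |- ?L <= ?R => assert (E : R - L = s * (8 * mu * B / (J * (J+1)) - 8 * mu * B / ((J+1)*(J+2))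
    + 32 * mu^2 * (H - h) / (J + 1))) end.
 { field. lra. }
 assert (0 <= 8 * mu * B / (J * (J+1)) - 8 * mu * B / ((J+1)*(J+2))).
 { unfold Rdiv. rewrite <- Rmult_minus_distr_l. apply Rmult_le_pos. nra.
   assert (/ ((J+1)*(J+2)) <= / (J * (J+1))). { apply Rinv_le_contravar; nra. } lra. }
 assert (0 <= 32 * mu^2 * (H - h) / (J + 1)).
 { unfold Rdiv. apply Rmult_le_pos. apply Rmult_le_pos. nra. lra. left; apply Rinv_0_lt_compat; lra. }
 assert (0 <= s * (8 * mu * B / (J * (J+1)) - 8 * mu * B / ((J+1)*(J+2)) + 32 * mu^2 * (H - h) / (J + 1))).
 { apply Rmult_le_pos; lra. }
 lra.
Qed.

Lemma Phi_super a mu n j b : 0 < a -> 0 <= mu <= 1 -> (1 <= j < n)%nat ->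
  let g := Phi a mu (Hn n) n (S j) in
  g b + (INR b / INR j) * (g (S b) - g b) + 2 * mu * (g (S (S b)) - g b) <= Phi a mu (Hn n) n j b.
Proof. intros Ha Hmu Hj g. unfold g, Phi. rewrite (Hs_step j n) by lia.
 rewrite !S_INR.
 assert (1 <= INR j) by (apply (le_INR 1); lia).
 pose proof (Hs_nonneg (S j) n). pose proof (Hs_le_Hn (S j) n).
 apply (phi_alg (/ a^2) mu (Hn n) (Hs (S j) n) (INR j) (INR b)); try lra.
 apply Rinv_0_lt_compat; nra. apply pos_INR.
Qed.

Lemma fdir_bounds a n b : 0 <= fdir a n b <= 1.
Proof. unfold fdir, dirac_open. destruct (Rlt_dec _ _); [destruct (Rlt_dec _ _)|]; lra. Qed.

Lemma fdir_0 a n : 0 < a -> fdir a n 0%nat = 0.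
Proof. intros Ha. unfold fdir, dirac_open. simpl. unfold Rdiv. rewrite Rmult_0_l.
 destruct (Rlt_dec a 0); [lra|auto]. Qed.

Lemma Phi_nonneg a mu H n j b : 0 < a -> 0 <= mu -> 0 <= H -> (1 <= j)%nat -> 0 <= Phi a mu H n j b.
Proof. intros Ha Hmu HH Hj. unfold Phi.
 assert (0 < INR j) by (apply lt_0_INR; lia). pose proof (pos_INR b). pose proof (Hs_nonneg j n).
 apply Rmult_le_pos. left; apply Rinv_0_lt_compat; nra.
 unfold Rdiv. repeat apply Rplus_le_le_0_compat; repeat apply Rmult_le_pos; try lra;
 try (left; apply Rinv_0_lt_compat; nra). Qed.

Lemma Phi_term a mu n b : 0 < a < 1 -> (1 <= n)%nat -> 0 <= mu ->
  fdir a n b <= Phi a mu (Hn n) n n b.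
Proof. intros Ha Hn1 Hmu.
 assert (HH : 0 <= Hn n) by apply Hs_nonneg.
 unfold fdir, dirac_open. destruct (Rlt_dec a (INR b / INR n)) as [Hlt|Hlt].
 2:{ apply Phi_nonneg; auto; lra. }
 destruct (Rlt_dec _ 1). 2:{ apply Phi_nonneg; auto; lra. }
 unfold Phi. rewrite (Hs_nil n n) by lia.
 assert (0 < INR n) by (apply lt_0_INR; lia). pose proof (pos_INR b).
 assert (HB : a * INR n < INR b). { apply Rmult_lt_reg_r with (/ INR n). apply Rinv_0_lt_compat; auto.
   rewrite Rmult_assoc, Rinv_r by lra. lra. }
 assert (HB1 : a * (INR n + 1) <= INR b + 1) by nra.
 assert (HB2 : a^2 * (INR n * (INR n + 1)) <= INR b * (INR b + 1)).
 { replace (a^2 * (INR n * (INR n + 1))) with ((a * INR n) * (a * (INR n + 1))) by ring.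
   apply Rmult_le_compat; nra. }
 assert (0 <= 12 * mu / (INR n + 1)) by (unfold Rdiv; apply Rmult_le_pos; [lra| left; apply Rinv_0_lt_compat; lra]).
 assert (1 <= / a ^ 2 * (INR b * (INR b + 1) / (INR n * (INR n + 1)))).
 { apply Rmult_le_reg_l with (a^2). nra. rewrite <- Rmult_assoc, Rinv_r by nra. rewrite Rmult_1_l, Rmult_1_r.
   apply Rmult_le_reg_r with (INR n * (INR n + 1)). nra. unfold Rdiv. rewrite Rmult_assoc, Rinv_l by nra. lra. }
 assert (0 < / a^2) by (apply Rinv_0_lt_compat; nra).
 replace (8 * mu * 0 * INR b / INR n) with 0 by (unfold Rdiv; ring).
 nra.
Qed.

Lemma V_le_Phi a mu n d : 0 < a < 1 -> 0 <= mu <= 1 -> forall j, (1 <= j)%nat -> (n - j = d)%nat -> (j <= n)%nat ->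
  forall b, V mu n j (fdir a n) b <= Phi a mu (Hn n) n j b.
Proof. intros Ha Hmu. assert (HH : 0 <= Hn n) by apply Hs_nonneg.
 induction d as [|d IH]; intros j Hj Hd Hjn b.
 - replace j with n by lia. rewrite V_end. apply Phi_term; auto; lia || lra.
 - rewrite V_step by lia.
   eapply Rle_trans. apply T_mono; auto. intros x; apply (IH (S j)); lia.
   eapply Rle_trans. apply T_upper; auto. intros x. apply Phi_mono; auto; lra || lia.
   apply Phi_super; auto; [lra|lia].
Qed.

Definition Lip (g : nat -> R) (L : R) := forall b, Rabs (g (S b) - g b) <= L.

Lemma abs_bnd x L : Rabs x <= L <-> -L <= x <= L.
Proof. split. intros H. unfold Rabs in H. destruct (Rcase_abs x); lra. intros H; apply Rabs_le; auto. Qed.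

Lemma abs3 c1 c2 c3 x1 x2 x3 L : 0 <= c1 -> 0 <= c2 -> 0 <= c3 ->
  Rabs x1 <= L -> Rabs x2 <= L -> Rabs x3 <= L ->
  Rabs (c1 * x1 + c2 * x2 + c3 * x3) <= (c1 + c2 + c3) * L.
Proof. intros. rewrite abs_bnd in *. split; nra. Qed.

Lemma Lip_gen g L b : Lip g L -> Rabs (g b - g (b - 1)%nat) <= L.
Proof. intros H. destruct b. simpl. rewrite Rminus_diag, Rabs_R0. specialize (H 0%nat).
 pose proof (Rabs_pos (g 1%nat - g 0%nat)). lra. replace (S b - 1)%nat with b by lia. apply H. Qed.

Lemma Lip_nonneg g L : Lip g L -> 0 <= L.
Proof. intros H. specialize (H 0%nat). pose proof (Rabs_pos (g 1%nat - g 0%nat)). lra. Qed.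

Lemma M_lip mu g L b : 0 <= mu <= 1 -> Lip g L -> Rabs (Mpart mu g (S b) - Mpart mu g b) <= L.
Proof. intros Hmu H. pose proof (qq_bounds mu Hmu). unfold Mpart. set (q := qq mu) in *.
 replace (S b - 1)%nat with b by lia.
 replace ((1 - q) ^ 2 * g b + 2 * q * (1 - q) * g (S b) + q ^ 2 * g (S (S b)) -
   ((1 - q) ^ 2 * g (b - 1)%nat + 2 * q * (1 - q) * g b + q ^ 2 * g (S b)))
 with ((1-q)^2 * (g b - g (b-1)%nat) + 2*q*(1-q) * (g (S b) - g b) + q^2 * (g (S (S b)) - g (S b))) by ring.
 apply Rle_trans with (((1-q)^2 + 2*q*(1-q) + q^2) * L); [|right; ring].
 apply abs3; try nra; auto. apply Lip_gen; auto. Qed.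

Lemma N_lip mu g L b : 0 <= mu <= 1 -> Lip g L -> Rabs (Npart mu g (S b) - Npart mu g b) <= L.
Proof. intros Hmu H. unfold Npart.
 replace ((1 - mu) ^ 2 * g (S b) + 2 * mu * (1 - mu) * g (S (S b)) + mu ^ 2 * g (S (S (S b))) -
   ((1 - mu) ^ 2 * g b + 2 * mu * (1 - mu) * g (S b) + mu ^ 2 * g (S (S b))))
 with ((1-mu)^2 * (g (S b) - g b) + 2*mu*(1-mu) * (g (S (S b)) - g (S b)) + mu^2 * (g (S (S (S b))) - g (S (S b)))) by ring.
 apply Rle_trans with (((1-mu)^2 + 2*mu*(1-mu) + mu^2) * L); [|right; ring].
 apply abs3; try nra; auto. Qed.

Lemma M_near mu g L b : 0 <= mu <= 1 -> Lip g L -> Rabs (Mpart mu g (S b) - g (S b)) <= L.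
Proof. intros Hmu H. pose proof (qq_bounds mu Hmu). unfold Mpart. set (q := qq mu) in *.
 replace (S b - 1)%nat with b by lia.
 replace ((1 - q) ^ 2 * g b + 2 * q * (1 - q) * g (S b) + q ^ 2 * g (S (S b)) - g (S b))
 with ((1-q)^2 * (-(g (S b) - g b)) + 0 * 0 + q^2 * (g (S (S b)) - g (S b))) by ring.
 apply Rle_trans with (((1-q)^2 + 0 + q^2) * L).
 apply abs3; [nra|lra|nra|rewrite Rabs_Ropp; auto|rewrite Rabs_R0; eapply Lip_nonneg; eauto|auto].
 pose proof (Lip_nonneg g L H). assert (0 <= 2*q*(1-q)*L) by (repeat apply Rmult_le_pos; lra). nra. Qed.

Lemma N_near mu g L b : 0 <= mu <= 1 -> Lip g L -> Rabs (Npart mu g b - g (S b)) <= L.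
Proof. intros Hmu H. unfold Npart.
 replace ((1 - mu) ^ 2 * g b + 2 * mu * (1 - mu) * g (S b) + mu ^ 2 * g (S (S b)) - g (S b))
 with ((1-mu)^2 * (-(g (S b) - g b)) + 0 * 0 + mu^2 * (g (S (S b)) - g (S b))) by ring.
 apply Rle_trans with (((1-mu)^2 + 0 + mu^2) * L).
 apply abs3; [nra|lra|nra|rewrite Rabs_Ropp; auto|rewrite Rabs_R0; eapply Lip_nonneg; eauto|auto].
 pose proof (Lip_nonneg g L H). assert (0 <= 2*mu*(1-mu)*L) by (repeat apply Rmult_le_pos; lra). nra. Qed.

Lemma T_lip mu k g L : 0 <= mu <= 1 -> (1 <= k)%nat -> Lip g L -> Lip (T mu k g) ((1 + / INR k) * L).
Proof. intros Hmu Hk H b. unfold T.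
 pose proof (wt_bounds k b Hk). pose proof (wt_bounds k (S b) Hk). pose proof (wt_step k b Hk).
 pose proof (M_lip mu g L b Hmu H). pose proof (N_lip mu g L b Hmu H).
 pose proof (M_near mu g L b Hmu H). pose proof (N_near mu g L b Hmu H).
 pose proof (Lip_nonneg g L H).
 set (w := wt k b) in *. set (w' := wt k (S b)) in *.
 set (M0 := Mpart mu g b) in *. set (M1 := Mpart mu g (S b)) in *.
 set (N0 := Npart mu g b) in *. set (N1 := Npart mu g (S b)) in *.
 replace (w' * M1 + (1 - w') * N1 - (w * M0 + (1 - w) * N0))
   with (w * (M1 - M0) + (1 - w') * (N1 - N0) + (w' - w) * ((M1 - g (S b)) - (N0 - g (S b)))) by ring.
 rewrite abs_bnd in *. assert (0 < INR k) by (apply lt_0_INR; lia).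
 set (ik := / INR k) in *.
 split; nra.
Qed.

Lemma Lip_weaken g L L' : Lip g L -> L <= L' -> Lip g L'.
Proof. intros H HL b. specialize (H b). lra. Qed.

Lemma V_lip mu n g L d : 0 <= mu <= 1 -> Lip g L -> forall j, (1 <= j)%nat -> (n - j = d)%nat -> (j <= n)%nat ->
  Lip (V mu n j g) (INR n / INR j * L).
Proof. intros Hmu HL. pose proof (Lip_nonneg g L HL).
 induction d as [|d IH]; intros j Hj Hd Hjn.
 - replace j with n by lia. intros b. rewrite !V_end.
   assert (0 < INR n) by (apply lt_0_INR; lia).
   replace (INR n / INR n * L) with L by (field; lra). apply HL.
 - assert (HT : Lip (T mu j (V mu n (S j) g)) ((1 + / INR j) * (INR n / INR (S j) * L))).
   { apply T_lip; auto. apply IH; lia. }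
   intros b. rewrite !V_step by lia.
   replace (INR n / INR j * L) with ((1 + / INR j) * (INR n / INR (S j) * L)).
   apply HT. rewrite S_INR. assert (0 < INR j) by (apply lt_0_INR; lia). field. lra.
Qed.

Lemma abs2 c1 c2 x1 x2 L1 L2 : 0 <= c1 -> 0 <= c2 -> Rabs x1 <= L1 -> Rabs x2 <= L2 ->
  Rabs (c1 * x1 + c2 * x2) <= c1 * L1 + c2 * L2.
Proof. intros. rewrite abs_bnd in *. split; nra. Qed.

Lemma T_cmp mu k h L b : 0 <= mu <= 1 -> (1 <= k)%nat -> Lip h L ->
  Rabs (T mu k h b - T 0 k h b) <= 2 * mu * L.
Proof. intros Hmu Hk H. pose proof (qq_bounds mu Hmu) as Hqb. pose proof (wt_bounds k b Hk) as Hwb.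
 pose proof (Lip_nonneg h L H) as HL0.
 assert (H1 : Rabs (h (b-1)%nat - h (S b)) <= 2 * L).
 { pose proof (Lip_gen h L b H). pose proof (H b). rewrite abs_bnd in *. lra. }
 pose proof (H b) as H2. pose proof (H (S b)) as H3.
 assert (H2' : Rabs (h b - h (S b)) <= L) by (rewrite Rabs_minus_sym; auto).
 assert (H4 : Rabs (h (S (S b)) - h b) <= 2 * L).
 { rewrite abs_bnd in *. lra. }
 set (q := qq mu) in *.
 assert (Hq : 1 - q = mu / 3) by (unfold q, qq; lra).
 assert (HX : Rabs (Mpart mu h b - h (S b)) <= 2 * mu * L).
 { unfold Mpart. fold q.
   replace ((1 - q) ^ 2 * h (b - 1)%nat + 2 * q * (1 - q) * h b + q ^ 2 * h (S b) - h (S b))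
   with ((1 - q)^2 * (h (b-1)%nat - h (S b)) + 2 * q * (1 - q) * (h b - h (S b))) by ring.
   eapply Rle_trans. apply abs2; [nra|nra|apply H1|apply H2'].
   rewrite Hq. nra. }
 assert (HY : Rabs (Npart mu h b - h b) <= 2 * mu * L).
 { unfold Npart.
   replace ((1 - mu) ^ 2 * h b + 2 * mu * (1 - mu) * h (S b) + mu ^ 2 * h (S (S b)) - h b)
   with (2 * mu * (1 - mu) * (h (S b) - h b) + mu ^ 2 * (h (S (S b)) - h b)) by ring.
   eapply Rle_trans. apply abs2; [nra|nra|apply H2|apply H4]. nra. }
 unfold T. replace (Mpart 0 h b) with (h (S b)) by (unfold Mpart, qq; simpl; field).
 replace (Npart 0 h b) with (h b) by (unfold Npart; ring).
 set (w := wt k b) in *.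
 replace (w * Mpart mu h b + (1 - w) * Npart mu h b - (w * h (S b) + (1 - w) * h b))
   with (w * (Mpart mu h b - h (S b)) + (1 - w) * (Npart mu h b - h b)) by ring.
 eapply Rle_trans. apply abs2; [lra|lra|apply HX|apply HY]. nra.
Qed.

Lemma T_nonexp mu k h e b : 0 <= mu <= 1 -> (1 <= k)%nat -> (forall x, Rabs (h x) <= e) ->
  Rabs (T mu k h b) <= e.
Proof. intros Hmu Hk H. pose proof (qq_bounds mu Hmu). pose proof (wt_bounds k b Hk).
 pose proof (H b). pose proof (H (b-1)%nat). pose proof (H (S b)). pose proof (H (S (S b))).
 assert (HM : Rabs (Mpart mu h b) <= e).
 { unfold Mpart. set (q := qq mu) in *. eapply Rle_trans. apply abs3; eauto; nra. right; ring. }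
 assert (HN : Rabs (Npart mu h b) <= e).
 { unfold Npart. eapply Rle_trans. apply abs3; eauto; nra. right; ring. }
 unfold T. eapply Rle_trans. apply abs2; [lra|lra|apply HM|apply HN]. right; ring. Qed.

Lemma V_cmp mu n g L d : 0 <= mu <= 1 -> Lip g L -> forall j, (1 <= j)%nat -> (n - j = d)%nat -> (j <= n)%nat ->
  forall b, Rabs (V mu n j g b - V 0 n j g b) <= 2 * mu * L * INR n * Hs j n.
Proof. intros Hmu HL. pose proof (Lip_nonneg g L HL).
 induction d as [|d IH]; intros j Hj Hd Hjn b.
 - replace j with n by lia. rewrite !V_end, Rminus_diag, Rabs_R0.
   rewrite Hs_nil by lia. lra.
 - rewrite !V_step by lia.
   replace (T mu j (V mu n (S j) g) b - T 0 j (V 0 n (S j) g) b) with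
     ((T mu j (V mu n (S j) g) b - T 0 j (V mu n (S j) g) b) +
      T 0 j (fun x => 1 * V mu n (S j) g x + (-1) * V 0 n (S j) g x) b)
     by (rewrite T_lin; ring).
   eapply Rle_trans; [apply Rabs_triang|].
   rewrite (Hs_step j n) by lia.
   assert (0 < INR (S j)) by (apply lt_0_INR; lia).
   assert (HA : Rabs (T mu j (V mu n (S j) g) b - T 0 j (V mu n (S j) g) b) <= 2 * mu * (INR n / INR (S j) * L)).
   { apply T_cmp; auto. apply V_lip with (n - S j)%nat; auto; lia. }
   assert (HB : Rabs (T 0 j (fun x => 1 * V mu n (S j) g x + (-1) * V 0 n (S j) g x) b) <= 2 * mu * L * INR n * Hs (S j) n).
   { apply T_nonexp; auto; try lra. intros x. replace (1 * V mu n (S j) g x + -1 * V 0 n (S j) g x) with (V mu n (S j) g x - V 0 n (S j) g x) by ring.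
     apply IH; lia. }
   replace (2 * mu * L * INR n * (/ INR (S j) + Hs (S j) n)) with (2 * mu * (INR n / INR (S j) * L) + 2 * mu * L * INR n * Hs (S j) n) by (field; lra).
   lra.
Qed.

Definition cthr (t : R) : nat := Z.to_nat (up t).

Lemma cthr_spec t : 0 <= t -> t < INR (cthr t) <= t + 1.
Proof. intros Ht. unfold cthr. destruct (archimed t) as [H1 H2].
 assert (Hz : (0 <= up t)%Z). { apply le_IZR. lra. }
 rewrite INR_IZR_INZ, Z2Nat.id by auto. lra. Qed.

Lemma nat_above (A : R) : exists N : nat, A < INR N.
Proof. destruct (Rle_dec 0 A). exists (cthr A). apply cthr_spec; auto.
 exists 0%nat. simpl. lra. Qed.

Definition ind_ge (c b : nat) : R := if Nat.leb c b then 1 else 0.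

Fixpoint Ff (m : nat) (x : R) : R := match m with O => 1 | S m' => Ff m' x * (x - INR m') end.

Lemma Ff_zero m p : (p < m)%nat -> Ff m (INR p) = 0.
Proof. induction m; intros H; [lia|]. simpl. destruct (Nat.eq_dec p m).
 subst. rewrite Rminus_diag. ring. rewrite IHm by lia. ring. Qed.

Lemma Ff_pos m x : INR m - 1 < x -> 0 < Ff m x.
Proof. induction m; intros H; simpl. lra. rewrite S_INR in H.
 apply Rmult_lt_0_compat. apply IHm. pose proof (pos_INR m). lra. lra. Qed.

Lemma Ff_shift m y : Ff (S m) (y + 1) = (y + 1) * Ff m y.
Proof. induction m. simpl. ring. change (Ff (S (S m)) (y + 1)) with (Ff (S m) (y + 1) * (y + 1 - INR (S m))).
 rewrite IHm. change (Ff (S m) y) with (Ff m y * (y - INR m)). rewrite S_INR. ring. Qed.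

Lemma T0_ind k c b : (1 <= k)%nat -> (1 <= c)%nat -> (c - 1 <= k)%nat ->
  T 0 k (ind_ge c) b = 1 * ind_ge c b + (INR (c - 1) / INR k) * (ind_ge (c - 1) b - ind_ge c b).
Proof. intros Hk Hc Hck. unfold T, Mpart, Npart, qq.
 replace (1 - (1 - 0/3)) with 0 by (unfold Rdiv; ring). replace (1 - 0/3) with 1 by (unfold Rdiv; ring).
 unfold ind_ge. destruct (Nat.leb c b) eqn:E1; destruct (Nat.leb (c-1) b) eqn:E2;
 destruct (Nat.leb c (S b)) eqn:E3; apply Nat.leb_le in E1 || apply Nat.leb_gt in E1;
 apply Nat.leb_le in E2 || apply Nat.leb_gt in E2; apply Nat.leb_le in E3 || apply Nat.leb_gt in E3;
 try lia; try ring.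
 assert (b = c - 1)%nat by lia. subst b. unfold wt. rewrite Nat.min_l by lia. ring.
Qed.

Lemma polya_tail j r : (2 <= j)%nat -> forall c, (1 <= c <= j + r)%nat ->
  Viter 0 j r (ind_ge c) 1%nat = Ff (j - 1) (INR (j + r - c)) / Ff (j - 1) (INR (j + r - 1)).
Proof. intros Hj. induction r as [|r IH]; intros c Hc.
 - simpl. assert (0 < Ff (j-1) (INR (j + 0 - 1))).
   { apply Ff_pos. replace (j+0-1)%nat with (j-1)%nat by lia. lra. }
   destruct (Nat.eq_dec c 1).
   + subst. unfold ind_ge. simpl. field. lra.
   + rewrite Ff_zero by lia. unfold ind_ge. destruct (Nat.leb c 1) eqn:E.
     apply Nat.leb_le in E; lia. unfold Rdiv; ring.
 - rewrite Viter_last.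
   set (k := (j + r)%nat).
   assert (Hk : (1 <= k)%nat) by (unfold k; lia).
   assert (Hpos : forall y, (j - 1 <= y)%nat -> 0 < Ff (j-1) (INR y)).
   { intros y Hy. apply Ff_pos. apply le_INR in Hy. lra. }
   destruct (Nat.eq_dec c (S k)) as [Hck|Hck].
   + rewrite (Viter_ext 0 r j _ (fun b => 1 * ind_ge c b + (INR (c - 1) / INR k) * (ind_ge (c - 1) b - ind_ge c b))).
     2:{ intros b. apply T0_ind; lia. }
     replace (INR (c - 1) / INR k) with 1.
     2:{ subst c. replace (S k - 1)%nat with k by lia. field. apply not_0_INR; lia. }
     rewrite (Viter_ext 0 r j _ (fun b => 1 * ind_ge (c - 1) b + 0 * ind_ge c b)) by (intros; ring).
     rewrite Viter_lin. rewrite IH by (unfold k in Hck; lia).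
     replace (j + S r - c)%nat with 0%nat by (unfold k in Hck; lia).
     replace (j + r - (c - 1))%nat with 0%nat by (unfold k in Hck; lia).
     rewrite (Ff_zero (j-1) 0) by lia. unfold Rdiv. ring.
   + destruct (Nat.eq_dec c 1) as [Hc1|Hc1].
     * subst c. rewrite (Viter_ext 0 r j _ (fun b => 1 * ind_ge 1 b + 0 * ind_ge 1 b)).
       2:{ intros b. rewrite T0_ind by lia. simpl. unfold Rdiv. ring. }
       rewrite Viter_lin, IH by lia.
       replace (j + r - 1)%nat with (j + S r - 1 - 1)%nat by lia.
       assert (0 < Ff (j - 1) (INR (j + S r - 1))) by (apply Hpos; lia).
       assert (0 < Ff (j - 1) (INR (j + S r - 1 - 1))) by (apply Hpos; lia).
       field. lra.
     * rewrite (Viter_ext 0 r j _ (fun b => (1 - INR (c - 1) / INR k) * ind_ge c b + (INR (c - 1) / INR k) * ind_ge (c - 1) b)).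
       2:{ intros b. rewrite T0_ind by lia. ring. }
       rewrite Viter_lin, !IH by lia.
       set (m' := (j - 2)%nat).
       replace (j - 1)%nat with (S m') by (unfold m'; lia).
       assert (Hx : INR (j + r - (c - 1)) = INR (j + r - c) + 1).
       { rewrite <- S_INR. f_equal. lia. }
       assert (HN : INR (j + S r - 1) = INR (j + r - 1) + 1).
       { rewrite <- S_INR. f_equal. lia. }
       assert (HX2 : INR (j + S r - c) = INR (j + r - c) + 1).
       { rewrite <- S_INR. f_equal. lia. }
       rewrite Hx, HN, HX2. rewrite !Ff_shift.
       set (x := INR (j + r - c)). set (N1 := INR (j + r - 1)).
       assert (HkN : INR k = N1 + 1). { unfold N1, k. rewrite <- S_INR. f_equal. lia. }
       assert (Hc1' : INR (c - 1) = INR k - x - 1).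
       { unfold x. rewrite !minus_INR by lia. simpl. unfold k. lra. }
       rewrite Hc1', HkN.
       simpl Ff at 2 4 6.
       assert (HK : 0 < Ff m' N1). { apply Ff_pos. unfold N1, m'. rewrite !minus_INR by lia.
          rewrite plus_INR. simpl. assert (2 <= INR j) by (apply (le_INR 2); auto). pose proof (pos_INR r). lra. }
       assert (HNm : 0 < N1 - INR m'). { unfold N1, m'. rewrite !minus_INR by lia. rewrite plus_INR. simpl.
          pose proof (pos_INR r). lra. }
       assert (0 <= N1) by (unfold N1; apply pos_INR).
       change (Ff (S m') x) with (Ff m' x * (x - INR m')). field. repeat split; lra.
Qed.

Lemma Un_cv_ev u v l N0 : (forall n, (N0 <= n)%nat -> u n = v n) -> Un_cv v l -> Un_cv u l.
Proof. intros He Hv eps Heps. destruct (Hv eps Heps) as [N HN]. exists (Nat.max N N0).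
 intros n Hn. rewrite He by lia. apply HN. lia. Qed.

Lemma Un_cv_const c : Un_cv (fun _ => c) c.
Proof. intros eps Heps. exists 0%nat. intros. unfold Rdist. rewrite Rminus_diag, Rabs_R0; lra. Qed.

Lemma cv_by_bound u L C D N0 : 0 <= C -> (forall n, (N0 <= n)%nat -> D < INR n /\ Rabs (u n - L) <= C / (INR n - D)) ->
  Un_cv u L.
Proof. intros HC H eps Heps. destruct (nat_above (D + C / eps)) as [N HN].
 exists (Nat.max N N0). intros n Hn. destruct (H n) as [H1 H2]; [lia|].
 unfold Rdist. eapply Rle_lt_trans; [apply H2|].
 assert (INR N <= INR n) by (apply le_INR; lia).
 assert (0 <= C / eps) by (unfold Rdiv; apply Rmult_le_pos; [lra|left; apply Rinv_0_lt_compat; lra]).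
 apply Rmult_lt_reg_r with (INR n - D). lra. unfold Rdiv. rewrite Rmult_assoc, Rinv_l by lra.
 assert (C / eps < INR n - D) by lra.
 assert (C < eps * (INR n - D)). { apply Rmult_lt_reg_l with (/ eps). apply Rinv_0_lt_compat; lra.
   rewrite <- Rmult_assoc, Rinv_l by lra. unfold Rdiv in *. lra. }
 lra. Qed.

Definition cseq (x : R) (n : nat) : nat := cthr (x * INR n).

Lemma ratio_cv x l : 0 <= x < 1 -> 0 <= l ->
  Un_cv (fun n => (INR (n - cseq x n) - l) / (INR (n - 1) - l)) (1 - x).
Proof. intros Hx Hl.
 destruct (nat_above (l + 1 + 1 / (1 - x))) as [N0 HN0].
 apply (cv_by_bound _ _ (3 + l) (1 + l) N0); [lra|]. intros n Hn.
 assert (HnN : INR N0 <= INR n) by (apply le_INR; auto).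
 assert (H1x : 0 < 1 - x) by lra.
 assert (0 <= 1 / (1 - x)) by (unfold Rdiv; apply Rmult_le_pos; [lra| left; apply Rinv_0_lt_compat; lra]).
 split. lra.
 assert (Hxn : 0 <= x * INR n) by (apply Rmult_le_pos; [lra|apply pos_INR]).
 destruct (cthr_spec _ Hxn) as [Hc1 Hc2]. fold (cseq x n) in Hc1, Hc2.
 assert (Hcn : (cseq x n <= n)%nat).
 { apply INR_le. assert (1 / (1 - x) * (1 - x) = 1) by (field; lra).
   assert (1 <= (1 - x) * INR n).
   { assert (1 / (1 - x) <= INR n) by lra.
     apply Rmult_le_compat_l with (r := 1 - x) in H1; [|lra]. lra. }
   lra. }
 assert (1 <= n)%nat. { apply INR_le. simpl. lra. }
 rewrite !minus_INR by lia. simpl.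
 assert (0 < INR n - 1 - l) by lra.
 replace ((INR n - INR (cseq x n) - l) / (INR n - 1 - l) - (1 - x))
   with ((x * INR n - INR (cseq x n) + 1 - x * (1 + l)) / (INR n - (1 + l))) by (field; lra).
 unfold Rdiv. rewrite Rabs_mult. rewrite (Rabs_right (/ (INR n - (1 + l)))).
 2:{ left. apply Rinv_0_lt_compat. lra. }
 apply Rmult_le_compat_r. left; apply Rinv_0_lt_compat; lra.
 rewrite abs_bnd. split; nra.
Qed.

Lemma Ff_S m y : Ff (S m) y = Ff m y * (y - INR m).
Proof. reflexivity. Qed.

Lemma Ff_ratio_cv x m : 0 <= x < 1 ->
  Un_cv (fun n => Ff m (INR (n - cseq x n)) / Ff m (INR (n - 1))) ((1 - x)^m).
Proof. intros Hx. induction m.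
 - simpl. eapply Un_cv_ev with (N0 := 0%nat); [|apply Un_cv_const]. intros; simpl. field.
 - apply Un_cv_ev with (N0 := (m + 2)%nat) (v := fun n => (Ff m (INR (n - cseq x n)) / Ff m (INR (n - 1))) *
        ((INR (n - cseq x n) - INR m) / (INR (n - 1) - INR m))).
   + intros n Hn. rewrite !Ff_S.
     assert (0 < Ff m (INR (n - 1))). { apply Ff_pos. rewrite minus_INR by lia. apply le_INR in Hn.
       rewrite plus_INR in Hn. simpl in Hn |- *. lra. }
     assert (INR (n - 1) - INR m <> 0). { rewrite minus_INR by lia. assert (INR m + 2 <= INR n).
       { replace 2 with (INR 2) by (simpl; lra). rewrite <- plus_INR. apply le_INR; lia. } simpl; lra. }
     field. split; lra.
   + simpl. rewrite Rmult_comm. apply CV_mult; auto. apply ratio_cv; auto. apply pos_INR.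
Qed.

Lemma tau_cv x j : 0 <= x < 1 -> (2 <= j)%nat ->
  Un_cv (fun n => V 0 n j (ind_ge (cseq x n)) 1%nat) ((1 - x)^(j - 1)).
Proof. intros Hx Hj.
 destruct (nat_above (INR j + 1 / (1 - x))) as [N0 HN0].
 apply Un_cv_ev with (N0 := N0) (v := fun n => Ff (j-1) (INR (n - cseq x n)) / Ff (j-1) (INR (n - 1))).
 2:{ apply Ff_ratio_cv; auto. }
 intros n Hn. unfold V.
 assert (HnN : INR N0 <= INR n) by (apply le_INR; auto).
 assert (0 <= 1 / (1 - x)) by (unfold Rdiv; apply Rmult_le_pos; [lra| left; apply Rinv_0_lt_compat; lra]).
 assert (Hjn : (j <= n)%nat). { apply INR_le. lra. }
 assert (Hxn : 0 <= x * INR n) by (apply Rmult_le_pos; [lra|apply pos_INR]).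
 destruct (cthr_spec _ Hxn) as [Hc1 Hc2]. fold (cseq x n) in Hc1, Hc2.
 assert (Hcn : (cseq x n <= n)%nat).
 { apply INR_le. assert (1 / (1 - x) * (1 - x) = 1) by (field; lra).
   assert (1 <= (1 - x) * INR n).
   { assert (1 / (1 - x) <= INR n) by (pose proof (pos_INR j); lra).
     apply Rmult_le_compat_l with (r := 1 - x) in H1; [|lra]. lra. }
   lra. }
 assert (Hc0 : (1 <= cseq x n)%nat). { destruct (cseq x n); [simpl in Hc1; lra| lia]. }
 rewrite polya_tail by lia. replace (j + (n - j))%nat with n by lia. reflexivity.
Qed.

Definition clamp (u : R) := Rmax 0 (Rmin 1 u).
Ltac rdec2 := repeat (match goal with |- context [Rle_dec ?x ?y] => let H := fresh "H" in destruct (Rle_dec x y) as [H|H]; revert H end); intros;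
  repeat match goal with H: ~ (_ <= _) |- _ => apply Rnot_le_lt in H end.

Lemma clamp_lip u v : Rabs (clamp u - clamp v) <= Rabs (u - v).
Proof. unfold Rabs at 2; destruct (Rcase_abs (u - v)); rewrite abs_bnd; unfold clamp, Rmax, Rmin.
 all: rdec2; split; lra. Qed.

Lemma div_le0 y d : 0 < d -> y <= 0 -> y / d <= 0.
Proof. intros. unfold Rdiv. assert (0 < / d) by (apply Rinv_0_lt_compat; auto). nra. Qed.

Lemma div_ge1 y d : 0 < d -> d <= y -> 1 <= y / d.
Proof. intros. apply Rmult_le_reg_r with d; auto. unfold Rdiv. rewrite Rmult_assoc, Rinv_l by lra. lra. Qed.

Lemma div_pos_inv y d : 0 < d -> 0 < y / d -> 0 < y.
Proof. intros Hd H. destruct (Rle_dec y 0); auto. pose proof (div_le0 y d Hd r). lra. lra. Qed.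

Lemma frac_lt t a n : 0 < INR n -> (a * INR n < t <-> a < t / INR n).
Proof. intros H. split; intros H1.
 apply Rmult_lt_reg_r with (INR n); auto. unfold Rdiv; rewrite Rmult_assoc, Rinv_l by lra; lra.
 apply Rmult_lt_reg_r with (/ INR n). apply Rinv_0_lt_compat; auto.
 rewrite Rmult_assoc, Rinv_r by lra. unfold Rdiv in H1. lra. Qed.

Lemma clamp_bounds u : 0 <= clamp u <= 1.
Proof. unfold clamp, Rmax, Rmin.
 rdec2; lra. Qed.

Lemma Rmin_lip u1 u2 v1 v2 e : Rabs (u1 - v1) <= e -> Rabs (u2 - v2) <= e -> Rabs (Rmin u1 u2 - Rmin v1 v2) <= e.
Proof. intros H1 H2. rewrite abs_bnd in *. unfold Rmin.
 rdec2; split; lra. Qed.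

Definition g_up (a d : R) (n b : nat) := clamp ((INR b / INR n - a + d) / d).
Definition g_lo (a d : R) (n b : nat) := clamp (Rmin ((INR b / INR n - a) / d) ((1 - INR b / INR n) / d)).

Lemma g_up_lip a d n : 0 < d -> (1 <= n)%nat -> Lip (g_up a d n) (/ (d * INR n)).
Proof. intros Hd Hn b. unfold g_up. eapply Rle_trans; [apply clamp_lip|].
 assert (0 < INR n) by (apply lt_0_INR; lia). rewrite S_INR.
 replace ((( INR b + 1) / INR n - a + d) / d - (INR b / INR n - a + d) / d) with (/ (d * INR n)) by (field; lra).
 rewrite Rabs_right. lra. left; apply Rinv_0_lt_compat; nra. Qed.

Lemma g_lo_lip a d n : 0 < d -> (1 <= n)%nat -> Lip (g_lo a d n) (/ (d * INR n)).
Proof. intros Hd Hn b. unfold g_lo. eapply Rle_trans; [apply clamp_lip|].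
 assert (0 < INR n) by (apply lt_0_INR; lia). rewrite S_INR.
 assert (0 < / (d * INR n)) by (apply Rinv_0_lt_compat; nra).
 apply Rmin_lip.
 replace ((( INR b + 1) / INR n - a) / d - (INR b / INR n - a) / d) with (/ (d * INR n)) by (field; lra).
 rewrite Rabs_right; lra.
 replace ((1 - (INR b + 1) / INR n) / d - (1 - INR b / INR n) / d) with (- / (d * INR n)) by (field; lra).
 rewrite Rabs_Ropp, Rabs_right; lra. Qed.

Lemma ind_cseq x n b : 0 <= x * INR n ->
  (ind_ge (cseq x n) b = 1 /\ x * INR n < INR b) \/ (ind_ge (cseq x n) b = 0 /\ INR b <= x * INR n).
Proof. intros H. destruct (cthr_spec _ H) as [H1 H2]. fold (cseq x n) in *. unfold ind_ge.
 destruct (Nat.leb (cseq x n) b) eqn:E.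
 - left. split; auto. apply Nat.leb_le, le_INR in E. lra.
 - right. split; auto. apply Nat.leb_gt in E. assert (S b <= cseq x n)%nat by lia.
   apply le_INR in H0. rewrite S_INR in H0. lra. Qed.

Lemma fdir_le_gup a d n b : 0 < d -> (1 <= n)%nat -> fdir a n b <= g_up a d n b.
Proof. intros Hd Hn. unfold fdir, dirac_open.
 destruct (Rlt_dec a (INR b / INR n)); [destruct (Rlt_dec _ 1)|]; try apply clamp_bounds.
 unfold g_up. assert (1 <= (INR b / INR n - a + d) / d) by (apply div_ge1; lra).
 unfold clamp, Rmax, Rmin; rdec2; lra.
Qed.

Lemma gup_le_ind a d n b : 0 < d -> (1 <= n)%nat -> 0 <= (a - d) * INR n ->
  g_up a d n b <= ind_ge (cseq (a - d) n) b.
Proof. intros Hd Hn Hx. assert (0 < INR n) by (apply lt_0_INR; lia).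
 destruct (ind_cseq (a - d) n b Hx) as [[E Hb]|[E Hb]]; rewrite E.
 - apply clamp_bounds.
 - unfold g_up. assert (INR b / INR n <= a - d).
   { destruct (Rle_dec (INR b / INR n) (a - d)); auto. apply Rnot_le_lt, frac_lt in n0; auto. lra. }
   assert ((INR b / INR n - a + d) / d <= 0) by (apply div_le0; lra).
   unfold clamp, Rmax, Rmin; rdec2; lra.
Qed.

Lemma glo_le_fdir a d n b : 0 < d -> (1 <= n)%nat -> g_lo a d n b <= fdir a n b.
Proof. intros Hd Hn. unfold fdir, dirac_open, g_lo.
 destruct (Rlt_dec a (INR b / INR n)); [destruct (Rlt_dec _ 1)|].
 - apply clamp_bounds.
 - assert ((1 - INR b / INR n) / d <= 0) by (apply div_le0; lra).
   unfold clamp, Rmax, Rmin; rdec2; lra.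
 - assert ((INR b / INR n - a) / d <= 0) by (apply div_le0; lra).
   unfold clamp, Rmax, Rmin; rdec2; lra.
Qed.

Lemma ind_le_glo a d n b : 0 < d -> (1 <= n)%nat -> 0 <= (a + d) * INR n -> 0 <= (1 - d) * INR n ->
  ind_ge (cseq (a + d) n) b - ind_ge (cseq (1 - d) n) b <= g_lo a d n b.
Proof. intros Hd Hn Hx1 Hx2. assert (0 < INR n) by (apply lt_0_INR; lia).
 pose proof (clamp_bounds (Rmin ((INR b / INR n - a) / d) ((1 - INR b / INR n) / d))).
 unfold g_lo in *.
 destruct (ind_cseq (a + d) n b Hx1) as [[E1 H1]|[E1 H1]]; rewrite E1;
 destruct (ind_cseq (1 - d) n b Hx2) as [[E2 H2]|[E2 H2]]; rewrite E2; try lra.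
 apply frac_lt in H1; auto.
 assert (INR b / INR n <= 1 - d).
 { destruct (Rle_dec (INR b / INR n) (1 - d)); auto. apply Rnot_le_lt, frac_lt in n0; auto. lra. }
 assert (1 <= (INR b / INR n - a) / d) by (apply div_ge1; lra).
 assert (1 <= (1 - INR b / INR n) / d) by (apply div_ge1; lra).
 unfold clamp, Rmax, Rmin; rdec2; lra.
Qed.

Lemma V_mono mu n j g g' : 0 <= mu <= 1 -> (1 <= j)%nat -> (forall b, g b <= g' b) ->
  forall b, V mu n j g b <= V mu n j g' b.
Proof. intros. unfold V. apply Viter_mono; auto. Qed.

Lemma cmp_bound mu n j g d : 0 <= mu <= 1 -> 0 < d -> (1 <= j <= n)%nat -> Lip g (/ (d * INR n)) ->
  forall b, Rabs (V mu n j g b - V 0 n j g b) <= 2 * mu * Hn n / d.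
Proof. intros Hmu Hd Hj HL b.
 eapply Rle_trans. apply (V_cmp mu n g (/ (d * INR n)) (n - j)); auto; lia.
 assert (0 < INR n) by (apply lt_0_INR; lia).
 replace (2 * mu * / (d * INR n) * INR n * Hs j n) with (2 * mu * Hs j n / d) by (field; lra).
 unfold Rdiv. apply Rmult_le_compat_r. left; apply Rinv_0_lt_compat; lra.
 apply Rmult_le_compat_l. lra. apply Hs_le_Hn. Qed.

Lemma head_upper a mu d n j : 0 < a < 1 -> 0 <= mu <= 1 -> 0 < d -> 0 <= a - d -> (2 <= j <= n)%nat ->
  V mu n j (fdir a n) 1%nat <= V 0 n j (ind_ge (cseq (a - d) n)) 1%nat + 2 * mu * Hn n / d.
Proof. intros Ha Hmu Hd Had Hj.
 assert (Hn1 : (1 <= n)%nat) by lia.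
 eapply Rle_trans. apply V_mono; auto. lia. intros b; apply (fdir_le_gup a d n b); auto.
 pose proof (cmp_bound mu n j (g_up a d n) d Hmu Hd ltac:(lia) (g_up_lip a d n Hd Hn1) 1%nat) as H.
 rewrite abs_bnd in H.
 assert (V 0 n j (g_up a d n) 1%nat <= V 0 n j (ind_ge (cseq (a - d) n)) 1%nat).
 { apply V_mono; try lra; try lia. intros b. apply gup_le_ind; auto.
   apply Rmult_le_pos; auto. apply pos_INR. }
 lra. Qed.

Lemma head_lower a mu d n j : 0 < a < 1 -> 0 <= mu <= 1 -> 0 < d <= 1 -> (2 <= j <= n)%nat ->
  V 0 n j (ind_ge (cseq (a + d) n)) 1%nat - V 0 n j (ind_ge (cseq (1 - d) n)) 1%nat - 2 * mu * Hn n / d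
  <= V mu n j (fdir a n) 1%nat.
Proof. intros Ha Hmu Hd Hj.
 assert (Hn1 : (1 <= n)%nat) by lia.
 eapply Rle_trans. 2:{ apply V_mono; auto. lia. intros b; apply (glo_le_fdir a d n b); lra || auto. }
 pose proof (cmp_bound mu n j (g_lo a d n) d Hmu ltac:(lra) ltac:(lia) (g_lo_lip a d n ltac:(lra) Hn1) 1%nat) as H.
 rewrite abs_bnd in H.
 assert (V 0 n j (fun b => 1 * ind_ge (cseq (a + d) n) b + (-1) * ind_ge (cseq (1 - d) n) b) 1%nat <= V 0 n j (g_lo a d n) 1%nat).
 { apply V_mono; try lra; try lia. intros b.
   pose proof (ind_le_glo a d n b ltac:(lra) Hn1). 
   assert (0 <= (a + d) * INR n) by (apply Rmult_le_pos; [lra|apply pos_INR]).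
   assert (0 <= (1 - d) * INR n) by (apply Rmult_le_pos; [lra|apply pos_INR]). 
   specialize (H0 H1 H2). lra. }
 unfold V in *. rewrite (Viter_lin 0 (n - j) j 1 (-1) (ind_ge (cseq (a + d) n)) (ind_ge (cseq (1 - d) n)) 1%nat) in H0. lra. Qed.

Lemma Hn_ge1 n : (1 <= n)%nat -> 1 <= Hn n.
Proof. intros H. unfold Hn, Hs. replace (n - 0)%nat with (S (n - 1)) by lia.
 change (seq 1 (S (n - 1))) with (1 :: seq 2 (n - 1))%nat. rewrite rsum_cons.
 assert (0 <= rsum (seq 2 (n - 1)) (fun i => / INR i)).
 { apply rsum_nonneg. intros x Hx. apply in_seq in Hx. left; apply Rinv_0_lt_compat, lt_0_INR; lia. }
 simpl. rewrite Rinv_1. lra. Qed.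

Lemma sum_tel s len : (1 <= s)%nat ->
  rsum (seq s len) (fun l => / (INR l * (INR l + 1))) = / INR s - / INR (s + len).
Proof. revert s; induction len; intros s Hs. rewrite Nat.add_0_r. unfold rsum; simpl; lra.
 change (seq s (S len)) with (s :: seq (S s) len). rewrite rsum_cons, IHlen by lia.
 replace (S s + len)%nat with (s + S len)%nat by lia. rewrite (S_INR s).
 assert (0 < INR s) by (apply lt_0_INR; lia).
 assert (0 < INR (s + S len)) by (apply lt_0_INR; lia). field. lra. Qed.

Lemma sum_inv_le s len n : (1 <= s)%nat -> (s + len <= S n)%nat ->
  rsum (seq s len) (fun l => / INR l) <= Hn n.
Proof. intros Hs1 Hl. unfold Hn, Hs. rewrite Nat.sub_0_r.
 replace (seq 1 n) with (seq 1 ((s - 1) + (len + (S n - s - len)))) by (f_equal; lia).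
 rewrite !seq_app. rewrite !rsum_app. replace (1 + (s - 1))%nat with s by lia.
 assert (0 <= rsum (seq 1 (s - 1)) (fun i => / INR i)).
 { apply rsum_nonneg. intros x Hx. apply in_seq in Hx. left; apply Rinv_0_lt_compat, lt_0_INR; lia. }
 assert (0 <= rsum (seq (s + len) (S n - s - len)) (fun i => / INR i)).
 { apply rsum_nonneg. intros x Hx. apply in_seq in Hx. left; apply Rinv_0_lt_compat, lt_0_INR; lia. }
 lra. Qed.

Section Bounds.
Variables (a mu : R) (n : nat).
Hypothesis Ha : 0 < a < 1.
Hypothesis Hmu : 0 <= mu <= 1.
Hypothesis Hn1 : (1 <= n)%nat.

Let H := Hn n.

Lemma V_bound j b : (1 <= j <= n)%nat ->
  V mu n j (fdir a n) b <= / a^2 * (INR b * (INR b + 1) * / (INR j * (INR j + 1)) + (8 * mu * H * INR b + 12 * mu) * / INR j + 32 * mu^2 * H^2).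
Proof. intros Hj. eapply Rle_trans. apply (V_le_Phi a mu n (n - j)); auto; lia.
 unfold Phi. fold H. assert (0 < INR j) by (apply lt_0_INR; lia).
 pose proof (Hs_le_Hn j n). pose proof (Hs_nonneg j n). fold H in H1.
 assert (0 < / a^2) by (apply Rinv_0_lt_compat; nra).
 apply Rmult_le_compat_l. lra. pose proof (pos_INR b).
 assert (/ (INR j + 1) <= / INR j) by (apply Rinv_le_contravar; lra).
 assert (0 < / INR j) by (apply Rinv_0_lt_compat; lra).
 unfold Rdiv.
 assert (8 * mu * Hs j n * INR b * / INR j <= 8 * mu * H * INR b * / INR j).
 { repeat apply Rmult_le_compat_r; try lra. apply Rmult_le_compat_l; lra. }
 assert (12 * mu * / (INR j + 1) <= 12 * mu * / INR j) by (apply Rmult_le_compat_l; lra).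
 assert (32 * mu^2 * H * Hs j n <= 32 * mu^2 * H^2).
 { replace (H^2) with (H * H) by ring. rewrite <- Rmult_assoc. apply Rmult_le_compat_l; [|lra].
   assert (0 <= mu^2) by nra. pose proof (Hs_nonneg 0 n). unfold Hn in H. nra. }
 lra. Qed.

Lemma V_nonneg j b : (1 <= j)%nat -> 0 <= V mu n j (fdir a n) b.
Proof. intros Hj. unfold V. rewrite <- (Viter_const mu (n - j) j 0 b).
 apply Viter_mono; auto. intros; apply fdir_bounds. Qed.

Lemma V_sum_bound s len b : (1 <= s)%nat -> (s + len <= S n)%nat ->
  rsum (seq s len) (fun l => V mu n l (fdir a n) b) <=
  / a^2 * (INR b * (INR b + 1) / INR s + (8 * mu * H * INR b + 12 * mu) * H + 32 * INR n * mu^2 * H^2).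
Proof. intros Hs1 Hl.
 eapply Rle_trans. apply rsum_le. intros l Hl'. apply in_seq in Hl'. apply V_bound. lia.
 rewrite rsum_scal. assert (0 < / a^2) by (apply Rinv_0_lt_compat; nra).
 apply Rmult_le_compat_l. lra.
 rewrite !rsum_plus, !rsum_scal, rsum_const, length_seq.
 idtac.
 rewrite sum_tel by auto.
 pose proof (sum_inv_le s len n Hs1 Hl). fold H in H1.
 assert (0 < INR s) by (apply lt_0_INR; lia).
 assert (0 < / INR (s + len)) by (apply Rinv_0_lt_compat, lt_0_INR; lia).
 pose proof (pos_INR b).
 assert (INR len <= INR n) by (apply le_INR; lia).
 assert (0 <= 32 * mu ^ 2 * H ^ 2) by (assert (0 <= mu^2) by nra; assert (0 <= H^2) by nra; nra).
 assert (0 <= 8 * mu * H * INR b + 12 * mu).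
 { pose proof (Hn_ge1 n Hn1). fold H in H7. assert (0 <= mu * H) by nra. nra. }
 assert (INR b * (INR b + 1) * (/ INR s - / INR (s + len)) <= INR b * (INR b + 1) / INR s).
 { unfold Rdiv. apply Rmult_le_compat_l; nra. }
 assert ((8 * mu * H * INR b + 12 * mu) * rsum (seq s len) (fun l => / INR l) <= (8 * mu * H * INR b + 12 * mu) * H).
 { apply Rmult_le_compat_l; auto. }
 assert (32 * mu ^ 2 * (INR len * H ^ 2) <= 32 * INR n * mu ^ 2 * H ^ 2).
 { replace (32 * INR n * mu ^ 2 * H ^ 2) with (INR n * (32 * mu ^ 2 * H ^ 2)) by ring.
   replace (32 * mu ^ 2 * (INR len * H ^ 2)) with (INR len * (32 * mu ^ 2 * H ^ 2)) by ring.
   apply Rmult_le_compat_r; auto. }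
 lra.
Qed.
End Bounds.

Lemma pow_le_one x m : 0 <= x <= 1 -> 0 <= x^m <= 1.
Proof. intros H. split. apply pow_le; lra. rewrite <- (pow1 m). apply pow_incr; lra. Qed.

Lemma pow_diff x d m : 0 <= x -> 0 <= d -> x + d <= 1 -> 0 <= (x + d)^m - x^m <= INR m * d.
Proof. intros Hx Hd H1. induction m. simpl. lra.
 rewrite S_INR. simpl.
 pose proof (pow_le_one x m ltac:(lra)). pose proof (pow_le_one (x+d) m ltac:(lra)).
 replace ((x + d) * (x + d) ^ m - x * x ^ m) with ((x + d) * ((x + d)^m - x^m) + d * x^m) by ring.
 split. apply Rplus_le_le_0_compat; apply Rmult_le_pos; lra.
 assert ((x + d) * ((x + d)^m - x^m) <= INR m * d) by nra.
 assert (d * x^m <= d) by nra. lra. Qed.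

Lemma geom_sum r J : (1 <= J)%nat -> r <> 1 ->
  rsum (seq 2 (J - 1)) (fun l => r^(l - 1)) = (r - r^J) / (1 - r).
Proof. intros HJ Hr. induction J as [|J IH]; [lia|].
 destruct (Nat.eq_dec J 0). subst. simpl. unfold rsum; simpl. field. lra.
 replace (S J - 1)%nat with (S (J - 1)) by lia. rewrite seq_S, rsum_app, IH by lia.
 rewrite rsum_cons, rsum_nil. replace (2 + (J - 1) - 1)%nat with J by lia.
 simpl. field. lra. Qed.

Lemma finite_N (P : nat -> nat -> Prop) : (forall l N N', (N <= N')%nat -> P l N -> P l N') ->
  forall J, (forall l, (l <= J)%nat -> exists N, P l N) -> exists N, forall l, (l <= J)%nat -> P l N.
Proof. intros Hm J. induction J as [|J IH]; intros H.
 - destruct (H 0%nat) as [N HN]; auto. exists N. intros l Hl. replace l with 0%nat by lia. auto.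
 - destruct IH as [N1 HN1]. intros; apply H; lia.
   destruct (H (S J)) as [N2 HN2]; auto.
   exists (Nat.max N1 N2). intros l Hl. destruct (Nat.eq_dec l (S J)).
   subst. apply Hm with N2; auto; lia. apply Hm with N1; auto. lia. apply HN1; lia.
Qed.

Section Main.
Variable a : R.
Hypothesis Ha : 0 < a < 1.

Definition pp (n : nat) (mu : R) := V mu n 1 (fdir a n) 0%nat.
Definition KK (n : nat) (mu : R) := mu + mu * Hn n ^ 2 + INR n * mu^2 * Hn n ^ 2.

Definition SZ n mu b := rsum (seq 2 (n - 1)) (fun l => V mu n l (fdir a n) b).

Lemma decomp n mu : (2 <= n)%nat ->
  pp n mu = (mu^2 - 2*mu) * SZ n mu 0 + 2*mu*(1-mu) * SZ n mu 1 + mu^2 * SZ n mu 2.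
Proof. intros Hn. unfold pp. rewrite (telescope mu n (fdir a n) (n - 1) 1) by lia.
 rewrite fdir_0 by lra. unfold Dl, SZ. rewrite !rsum_plus, !rsum_scal. ring. Qed.

Lemma err_alg p mu Z A W c : 0 <= mu <= 1 -> 0 <= Z -> 0 <= W -> 0 <= c ->
  p = (mu^2 - 2*mu) * Z + 2*mu*(1-mu) * A + mu^2 * W ->
  Rabs (p - 2 * c * mu) <= mu * (2 * Z + 2 * Rabs (A - c) + 2 * mu * c + mu * W).
Proof. intros Hmu HZ HW Hc Hp. subst p.
 replace ((mu ^ 2 - 2 * mu) * Z + 2 * mu * (1 - mu) * A + mu ^ 2 * W - 2 * c * mu)
  with (mu * ((mu - 2) * Z + 2 * (1 - mu) * (A - c) - 2 * mu * c + mu * W)) by ring.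
 rewrite Rabs_mult, Rabs_right by lra. apply Rmult_le_compat_l. lra.
 pose proof (Rabs_pos (A - c)).
 unfold Rabs at 1. destruct (Rcase_abs _).
 - assert (2 * (1 - mu) * (A - c) >= - 2 * Rabs (A - c)).
   { unfold Rabs; destruct (Rcase_abs (A - c)); nra. }
   nra.
 - assert (2 * (1 - mu) * (A - c) <= 2 * Rabs (A - c)).
   { unfold Rabs; destruct (Rcase_abs (A - c)); nra. }
   nra.
Qed.
End Main.

Section Main2.
Variable a : R.
Hypothesis Ha : 0 < a < 1.

Lemma head_term_bound n mu d l : 0 <= mu <= 1 -> 0 < d -> d <= a / 2 -> d <= (1 - a) / 2 ->
  (2 <= l <= n)%nat ->
  Rabs (V 0 n l (ind_ge (cseq (a - d) n)) 1%nat - (1 - (a - d))^(l-1)) < d ->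
  Rabs (V 0 n l (ind_ge (cseq (a + d) n)) 1%nat - (1 - (a + d))^(l-1)) < d ->
  Rabs (V 0 n l (ind_ge (cseq (1 - d) n)) 1%nat - (1 - (1 - d))^(l-1)) < d ->
  Rabs (V mu n l (fdir a n) 1%nat - (1 - a)^(l-1)) <= INR l * d + 2 * d + 2 * mu * Hn n / d.
Proof. intros Hmu Hd Hd1 Hd2 Hl T1 T2 T3.
 pose proof (head_upper a mu d n l Ha Hmu Hd ltac:(lra) Hl) as HU.
 pose proof (head_lower a mu d n l Ha Hmu ltac:(lra) Hl) as HL.
 apply Rlt_le in T1, T2, T3. rewrite abs_bnd in T1, T2, T3. rewrite abs_bnd.
 set (m := (l - 1)%nat).
 assert (Hm : INR m <= INR l) by (apply le_INR; lia).
 assert (Hm1 : (1 <= m)%nat) by (unfold m; lia).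
 pose proof (pow_diff (1 - a) d m ltac:(lra) ltac:(lra) ltac:(lra)) as P1.
 pose proof (pow_diff (1 - a - d) d m ltac:(lra) ltac:(lra) ltac:(lra)) as P2.
 replace (1 - a - d + d) with (1 - a) in P2 by ring.
 replace (1 - (a - d)) with (1 - a + d) in T1 by ring.
 replace (1 - (a + d)) with (1 - a - d) in T2 by ring.
 replace (1 - (1 - d)) with d in T3 by ring.
 assert (Hdm : d^m <= d). { destruct m; [lia|]. simpl. pose proof (pow_le_one d m ltac:(lra)). nra. }
 assert (0 <= d^m) by (apply pow_le; lra).
 assert (0 <= 2 * mu * Hn n / d).
 { unfold Rdiv. apply Rmult_le_pos. pose proof (Hs_nonneg 0 n). unfold Hn. nra. left; apply Rinv_0_lt_compat; lra. }
 fold m in HU, HL, T1, T2, T3. assert (INR l = INR m + 1) by (unfold m; rewrite minus_INR by lia; simpl; ring). split; nra.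
Qed.

End Main2.

Section Main3.
Variable a : R.
Hypothesis Ha : 0 < a < 1.

Lemma main_analytic eps : 0 < eps -> exists N0 rho, 0 < rho /\
  forall n mu, (N0 <= n)%nat -> 0 <= mu <= 1 -> KK n mu <= rho ->
  Rabs (pp a n mu - 2 * (/ a - 1) * mu) <= eps * mu.
Proof. intros Heps.
 set (r := 1 - a).
 assert (Ha2 : 0 < a^2) by nra.
 destruct (nat_above (16 / (a^2 * eps))) as [J1 HJ1].
 destruct (pow_lt_1_zero r ltac:(unfold r; rewrite Rabs_right; lra) (eps * a / 8) ltac:(nra)) as [J2 HJ2].
 set (J := Nat.max (Nat.max J1 J2) 2).
 assert (HJ2' : (2 <= J)%nat) by (unfold J; lia).
 assert (HJR : 2 <= INR J) by (apply (le_INR 2); auto).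
 assert (HJa : 4 / (a^2 * (INR J + 1)) <= eps / 4).
 { assert (INR J1 <= INR J) by (apply le_INR; unfold J; lia).
   assert (16 / (a^2 * eps) * (a^2 * eps) = 16) by (field; lra).
   assert (0 < a^2 * eps) by nra.
   assert (0 <= (INR J + 1 - 16 / (a^2 * eps)) * (a^2 * eps)) by (apply Rmult_le_pos; lra).
   assert (16 <= (INR J + 1) * (a^2 * eps)) by nra.
   apply Rmult_le_reg_r with (a^2 * (INR J + 1)). nra.
   unfold Rdiv. rewrite Rmult_assoc, Rinv_l by nra. nra. }
 assert (HJr : 2 * r^J / a <= eps / 4).
 { specialize (HJ2 J ltac:(unfold J; lia)). rewrite Rabs_right in HJ2.
   2:{ apply Rle_ge, pow_le. unfold r; lra. }
   apply Rmult_le_reg_r with a. lra. unfold Rdiv. rewrite Rmult_assoc, Rinv_l by lra. nra. }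
 set (d := Rmin (Rmin (a/2) ((1-a)/2)) (eps / (8 * INR J * (INR J + 2)))).
 assert (Hdpos : 0 < d).
 { unfold d. apply Rmin_glb_lt. apply Rmin_glb_lt; lra.
   unfold Rdiv. apply Rmult_lt_0_compat; auto. apply Rinv_0_lt_compat. nra. }
 assert (Hd1 : d <= a / 2) by (unfold d; eapply Rle_trans; [apply Rmin_l|apply Rmin_l]).
 assert (Hd2 : d <= (1 - a) / 2) by (unfold d; eapply Rle_trans; [apply Rmin_l|apply Rmin_r]).
 assert (Hd3 : 2 * INR J * (INR J + 2) * d <= eps / 4).
 { assert (d <= eps / (8 * INR J * (INR J + 2))) by (unfold d; apply Rmin_r).
   assert (eps / (8 * INR J * (INR J + 2)) * (8 * INR J * (INR J + 2)) = eps) by (field; nra).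
   nra. }
 destruct (finite_N (fun l N => (2 <= l)%nat -> forall n, (N <= n)%nat ->
     Rabs (V 0 n l (ind_ge (cseq (a - d) n)) 1%nat - (1 - (a - d))^(l-1)) < d /\
     Rabs (V 0 n l (ind_ge (cseq (a + d) n)) 1%nat - (1 - (a + d))^(l-1)) < d /\
     Rabs (V 0 n l (ind_ge (cseq (1 - d) n)) 1%nat - (1 - (1 - d))^(l-1)) < d)) with (J := J) as [Nt HNt].
 { intros l N N' HNN' HP Hl n Hn. apply HP; auto; lia. }
 { intros l _. destruct (le_lt_dec 2 l) as [Hl|Hl].
   - destruct (tau_cv (a - d) l ltac:(lra) Hl d Hdpos) as [N1 HN1].
     destruct (tau_cv (a + d) l ltac:(lra) Hl d Hdpos) as [N2 HN2].
     destruct (tau_cv (1 - d) l ltac:(lra) Hl d Hdpos) as [N3 HN3].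
     exists (Nat.max N1 (Nat.max N2 N3)). intros _ n Hn.
     unfold Rdist in *. repeat split; [apply HN1|apply HN2|apply HN3]; lia.
   - exists 0%nat. intros; lia. }
 set (c := / a - 1).
 assert (Hc : c = r / a) by (unfold c, r; field; lra).
 assert (Hc0 : 0 <= c) by (rewrite Hc; unfold r; unfold Rdiv; apply Rmult_le_pos; [lra|left; apply Rinv_0_lt_compat; lra]).
 set (C := 255 / a^2 + 4 * INR J / d + 2 * c + 1).
 assert (HC : 0 < C).
 { unfold C. assert (0 < 255 / a^2) by (unfold Rdiv; apply Rmult_lt_0_compat; [lra|apply Rinv_0_lt_compat; lra]).
   assert (0 < 4 * INR J / d) by (unfold Rdiv; apply Rmult_lt_0_compat; [lra|apply Rinv_0_lt_compat; lra]). lra. }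
 exists (Nat.max Nt (S J)), (eps / (4 * C)). split.
 { unfold Rdiv. apply Rmult_lt_0_compat; auto. apply Rinv_0_lt_compat; lra. }
 intros n mu HnN Hmu HK.
 assert (HnJ : (S J <= n)%nat) by lia.
 assert (Hn1 : (1 <= n)%nat) by lia.
 set (H := Hn n).
 assert (HH : 1 <= H) by (apply Hn_ge1; auto).
 set (K := KK n mu).
 assert (HK0 : K = mu + mu * H^2 + INR n * mu^2 * H^2) by reflexivity.
 assert (Hmu2 : 0 <= mu^2) by nra.
 assert (HH2 : 1 <= H^2) by nra.
 assert (Hnr : 0 <= INR n) by apply pos_INR.
 assert (Ht3 : 0 <= INR n * mu^2 * H^2) by (repeat apply Rmult_le_pos; nra).
 assert (Ht2 : 0 <= mu * H^2) by nra.
 assert (hK1 : mu <= K) by lra.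
 assert (hK2 : mu * H <= K) by nra.
 assert (hK3 : mu * H^2 <= K) by lra.
 assert (hK4 : INR n * mu^2 * H^2 <= K) by lra.
 assert (HKpos : 0 <= K) by lra.
 assert (HKC : K * C <= eps / 4).
 { apply Rmult_le_reg_r with (/ C). apply Rinv_0_lt_compat; lra.
   rewrite Rmult_assoc, Rinv_r by lra. unfold Rdiv in HK. rewrite Rinv_mult in HK. 
   replace (eps / 4 * / C) with (eps * (/ 4 * / C)) by (unfold Rdiv; ring). change (KK n mu) with K in HK. lra. }
 set (ia := / a^2).
 assert (Hia : 0 < ia) by (apply Rinv_0_lt_compat; lra).
 set (Z := SZ a n mu 0).
 assert (HZ0 : 0 <= Z) by (apply rsum_nonneg; intros l Hl; apply in_seq in Hl; apply V_nonneg; auto; lia).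
 assert (HZ : Z <= ia * (44 * K)).
 { eapply Rle_trans. apply (V_sum_bound a mu n Ha Hmu Hn1 2 (n - 1) 0); lia.
   fold H. fold ia. apply Rmult_le_compat_l. lra. simpl INR.
   replace (0 * (0 + 1) / INR 2) with 0 by (unfold Rdiv; ring).
   replace ((8 * mu * H * 0 + 12 * mu) * H) with (12 * (mu * H)) by ring.
   replace (32 * INR n * mu ^ 2 * H ^ 2) with (32 * (INR n * mu ^ 2 * H ^ 2)) by ring. lra. }
 set (W := SZ a n mu 2).
 assert (HW0 : 0 <= W) by (apply rsum_nonneg; intros l Hl; apply in_seq in Hl; apply V_nonneg; auto; lia).
 assert (HW : mu * W <= ia * (63 * K)).
 { assert (W <= ia * (3 + (16 * mu * H + 12 * mu) * H + 32 * INR n * mu ^ 2 * H ^ 2)).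
   { eapply Rle_trans. apply (V_sum_bound a mu n Ha Hmu Hn1 2 (n - 1) 2); lia.
     fold H. fold ia. apply Rmult_le_compat_l. lra. simpl INR.
     replace ((1 + 1) * (1 + 1 + 1) / (1 + 1)) with 3 by field.
     replace (8 * mu * H * (1 + 1)) with (16 * mu * H) by ring. lra. }
   apply Rle_trans with (mu * (ia * (3 + (16 * mu * H + 12 * mu) * H + 32 * INR n * mu ^ 2 * H ^ 2))).
   apply Rmult_le_compat_l; lra.
   replace (mu * (ia * (3 + (16 * mu * H + 12 * mu) * H + 32 * INR n * mu ^ 2 * H ^ 2)))
     with (ia * (3 * mu + 16 * mu * (mu * H^2) + 12 * mu * (mu * H) + 32 * mu * (INR n * mu^2 * H^2))) by ring.
   apply Rmult_le_compat_l. lra. nra. }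
 set (Head := rsum (seq 2 (J - 1)) (fun l => V mu n l (fdir a n) 1%nat)).
 set (Tail := rsum (seq (S J) (n - J)) (fun l => V mu n l (fdir a n) 1%nat)).
 assert (HA : SZ a n mu 1 = Head + Tail).
 { unfold SZ, Head, Tail. replace (n - 1)%nat with ((J - 1) + (n - J))%nat by lia.
   rewrite seq_app, rsum_app. replace (2 + (J - 1))%nat with (S J) by lia. reflexivity. }
 assert (HT0 : 0 <= Tail) by (apply rsum_nonneg; intros l Hl; apply in_seq in Hl; apply V_nonneg; auto; lia).
 assert (HT : Tail <= ia * (2 / (INR J + 1) + 52 * K)).
 { eapply Rle_trans. apply (V_sum_bound a mu n Ha Hmu Hn1 (S J) (n - J) 1); lia.
   fold H. fold ia. apply Rmult_le_compat_l. lra. rewrite (S_INR J). change (INR 1) with 1.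
   replace (1 * (1 + 1) / (INR J + 1)) with (2 / (INR J + 1)) by (field; lra).
   replace ((8 * mu * H * 1 + 12 * mu) * H) with (8 * (mu * H^2) + 12 * (mu * H)) by ring.
   replace (32 * INR n * mu ^ 2 * H ^ 2) with (32 * (INR n * mu ^ 2 * H ^ 2)) by ring. lra. }
 set (SJ := rsum (seq 2 (J - 1)) (fun l => r^(l - 1))).
 assert (HSJ : SJ = (r - r^J) / a).
 { unfold SJ. rewrite geom_sum by (lia || (unfold r; lra)). unfold r. f_equal. ring. }
 assert (Hhead : Rabs (Head - SJ) <= INR J * ((INR J + 2) * d + 2 * K / d)).
 { unfold Head, SJ. replace (INR J) with (INR (J - 1) + 1) at 1 by (rewrite minus_INR by lia; simpl; ring).
   assert (HB : Rabs (rsum (seq 2 (J - 1)) (fun l => V mu n l (fdir a n) 1%nat) - rsum (seq 2 (J - 1)) (fun l => r ^ (l - 1)))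
     <= INR (J - 1) * ((INR J + 2) * d + 2 * K / d)).
   { replace (rsum (seq 2 (J - 1)) (fun l => V mu n l (fdir a n) 1%nat) - rsum (seq 2 (J - 1)) (fun l => r ^ (l - 1)))
       with (rsum (seq 2 (J - 1)) (fun l => 1 * V mu n l (fdir a n) 1%nat + (-1) * r ^ (l - 1)))
       by (rewrite rsum_plus, !rsum_scal; ring).
     eapply Rle_trans. apply rsum_abs.
     replace (INR (J - 1)) with (INR (length (seq 2 (J - 1)))) by (rewrite length_seq; auto).
     rewrite <- rsum_const. apply rsum_le.
     intros l Hl. apply in_seq in Hl.
     destruct (HNt l ltac:(lia) ltac:(lia) n ltac:(lia)) as [T1 [T2 T3]].
     pose proof (head_term_bound a Ha n mu d l Hmu Hdpos Hd1 Hd2 ltac:(lia) T1 T2 T3) as HB.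
     replace (1 * V mu n l (fdir a n) 1%nat + -1 * r ^ (l - 1)) with (V mu n l (fdir a n) 1%nat - (1 - a) ^ (l - 1)) by (unfold r; ring).
     eapply Rle_trans. apply HB.
     assert (INR l <= INR J) by (apply le_INR; lia).
     assert (2 * mu * Hn n / d <= 2 * K / d).
     { unfold Rdiv. apply Rmult_le_compat_r. left; apply Rinv_0_lt_compat; lra. fold H. lra. }
     nra. }
   assert (0 <= (INR J + 2) * d + 2 * K / d).
   { assert (0 <= 2 * K / d) by (unfold Rdiv; apply Rmult_le_pos; [lra|left; apply Rinv_0_lt_compat; lra]). nra. }
   nra. }
 assert (HAc : Rabs (SZ a n mu 1 - c) <= Rabs (Head - SJ) + Tail + r^J / a).
 { rewrite HA. replace c with (SJ + r^J / a) by (rewrite HSJ, Hc; field; lra).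
   replace (Head + Tail - (SJ + r ^ J / a)) with ((Head - SJ) + (Tail - r^J / a)) by ring.
   eapply Rle_trans. apply Rabs_triang.
   assert (0 <= r^J / a) by (unfold Rdiv; apply Rmult_le_pos; [apply pow_le; unfold r; lra|left; apply Rinv_0_lt_compat; lra]).
   assert (Rabs (Tail - r^J / a) <= Tail + r^J / a) by (rewrite abs_bnd; split; lra).
   lra. }
 pose proof (err_alg (pp a n mu) mu Z (SZ a n mu 1) W c Hmu HZ0 HW0 Hc0 (decomp a Ha n mu ltac:(lia))) as HE.
 fold Z W in HE.
 eapply Rle_trans. apply HE. rewrite Rmult_comm. apply Rmult_le_compat_r. lra.
 assert (E1 : 2 * INR J * ((INR J + 2) * d + 2 * K / d) <= eps / 4 + K * (4 * INR J / d)).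
 { replace (2 * INR J * ((INR J + 2) * d + 2 * K / d)) with (2 * INR J * (INR J + 2) * d + K * (4 * INR J / d)) by (field; lra). lra. }
 assert (E2 : 2 * (ia * (2 / (INR J + 1) + 52 * K)) = 4 / (a^2 * (INR J + 1)) + K * (104 / a^2)).
 { unfold ia. field. lra. }
 assert (E3 : 2 * Z <= K * (88 / a^2)) by (unfold ia in HZ; unfold Rdiv; nra).
 assert (E4 : mu * W <= K * (63 / a^2)) by (unfold ia in HW; unfold Rdiv; nra).
 assert (E5 : 2 * mu * c <= K * (2 * c)) by nra.
 assert (E6 : K * (88 / a^2) + K * (104 / a^2) + K * (63 / a^2) + K * (4 * INR J / d) + K * (2 * c) <= K * C).
 { unfold C. replace (255 / a^2) with (88 / a^2 + 104 / a^2 + 63 / a^2) by (field; lra). nra. }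
 assert (2 * Rabs (SZ a n mu 1 - c) <= 2 * INR J * ((INR J + 2) * d + 2 * K / d) + 2 * (ia * (2 / (INR J + 1) + 52 * K)) + 2 * r^J / a).
 { unfold Rdiv at 3. lra. }
 lra.
Qed.

End Main3.

Lemma ln_le_sub1 x : 0 < x -> ln x <= x - 1.
Proof. intros H. pose proof (exp_ineq1_le (ln x)). rewrite exp_ln in H0 by auto. lra. Qed.

Lemma Hn_S n : Hn (S n) = Hn n + / INR (S n).
Proof. unfold Hn, Hs. rewrite !Nat.sub_0_r. rewrite seq_S, rsum_app. rewrite rsum_cons, rsum_nil.
 replace (1 + n)%nat with (S n) by lia. ring. Qed.

Lemma Hn_ln n : (1 <= n)%nat -> Hn n <= 1 + ln (INR n).
Proof. induction n as [|n IH]; intros Hn1; [lia|].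
 destruct (Nat.eq_dec n 0). subst. unfold Hn, Hs. simpl. unfold rsum; simpl. rewrite ln_1. lra.
 rewrite Hn_S. specialize (IH ltac:(lia)).
 assert (0 < INR n) by (apply lt_0_INR; lia).
 rewrite S_INR. 
 assert (ln (INR n / (INR n + 1)) <= INR n / (INR n + 1) - 1) by (apply ln_le_sub1; unfold Rdiv; apply Rmult_lt_0_compat; [lra|apply Rinv_0_lt_compat; lra]).
 unfold Rdiv in H0. rewrite ln_mult, ln_Rinv in H0 by (try apply Rinv_0_lt_compat; lra).
 replace (INR n * / (INR n + 1) - 1) with (- / (INR n + 1)) in H0 by (field; lra). lra. Qed.

Lemma Hn_sq_small e : 0 < e -> exists M, forall n, (M <= n)%nat -> Hn n ^ 2 / INR n <= e.
Proof. intros He. destruct (nat_above ((25 / e)^2 + 1)) as [M HM]. exists M. intros n Hn1.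
 assert (HnM : INR M <= INR n) by (apply le_INR; auto).
 assert (H25 : 0 <= (25/e)^2) by nra.
 assert (Hn0 : 1 <= INR n) by lra.
 assert (Hn1' : (1 <= n)%nat) by (apply INR_le; simpl; lra).
 set (x := INR n) in *.
 set (s := sqrt x). set (t := sqrt s).
 assert (Hs : s * s = x) by (apply sqrt_sqrt; lra).
 assert (Hs1 : 1 <= s). { unfold s. rewrite <- sqrt_1. apply sqrt_le_1_alt. lra. }
 assert (Ht : t * t = s) by (apply sqrt_sqrt; lra).
 assert (Ht1 : 1 <= t). { unfold t. rewrite <- sqrt_1. apply sqrt_le_1_alt. lra. }
 assert (Hl : ln x = 4 * ln t).
 { rewrite <- Hs, <- Ht. rewrite !ln_mult by nra. ring. }
 pose proof (ln_le_sub1 t ltac:(lra)).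
 pose proof (Hn_ln n Hn1'). fold x in H0.
 assert (0 <= ln t). { destruct (Req_dec t 1). rewrite H1, ln_1; lra. rewrite <- ln_1. left; apply ln_increasing; lra. }
 assert (HH : 0 <= Hn n) by apply Hs_nonneg.
 assert (Hn n <= 5 * t) by lra.
 assert (Hn n ^ 2 <= 25 * s) by nra.
 assert (25 / e <= s).
 { apply Rsqr_incr_0_var. unfold Rsqr. rewrite Hs. simpl in H25 |- *. nra. lra. }
 assert (25 <= e * s).
 { assert (25 / e * e = 25) by (field; lra). nra. }
 apply Rle_trans with (25 * s / x).
 unfold Rdiv. apply Rmult_le_compat_r. left; apply Rinv_0_lt_compat; lra. auto.
 rewrite <- Hs. replace (25 * s / (s * s)) with (25 / s) by (field; lra).
 apply Rmult_le_reg_r with s. lra. unfold Rdiv. rewrite Rmult_assoc, Rinv_l by lra. lra.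
Qed.

Theorem mainTheorem4
  (a theta eta : R) (n : nat -> nat) (mu : nat -> R) (m : nat -> nat)
  (u : nat -> list Nuc) :
  0 < a < 1 ->
  0 <= theta -> 0 <= eta ->
  (forall k, 0 <= mu k <= 1) ->
  (forall k, (1 <= m k)%nat) ->
  (forall k, length (u k) = m k) ->
  (forall M : nat, exists K : nat, forall k, (K <= k)%nat -> (M <= n k)%nat) ->
  Un_cv mu 0 ->
  Un_cv (fun k => INR (n k) * mu k) theta ->
  Un_cv (fun k => INR (m k) * mu k) eta ->
  Un_cv (fun k => expected_stat a (n k) (mu k) (m k) (u k))
        (2 * eta * (/ a - 1)).
Proof.
 intros Ha Hth Het Hmu Hm Hu HnInf Hmu0 Hnmu Hmmu eps Heps.
 set (c := / a - 1).
 assert (Hc : 0 <= c). { unfold c. assert (1 < / a). { rewrite <- Rinv_1. apply Rinv_lt_contravar; lra. } lra. }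
 set (e1 := eps / (2 * (eta + 1))).
 assert (He1 : 0 < e1) by (unfold e1; unfold Rdiv; apply Rmult_lt_0_compat; [lra|apply Rinv_0_lt_compat; lra]).
 destruct (main_analytic a Ha e1 He1) as [N0 [rho [Hrho Hmain]]].
 set (e2 := Rmin 1 (eps / (4 * c + 4))).
 assert (He2 : 0 < e2). { unfold e2. apply Rmin_glb_lt. lra. unfold Rdiv; apply Rmult_lt_0_compat; [lra|apply Rinv_0_lt_compat; lra]. }
 destruct (Hmmu e2 He2) as [K1 HK1].
 destruct (Hnmu 1 ltac:(lra)) as [K3 HK3].
 destruct (Hmu0 (rho / 3) ltac:(lra)) as [K4 HK4].
 set (B := theta + 1).
 set (e0 := rho / (3 * (B + B^2))).
 assert (HB : 0 < B) by (unfold B; lra).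
 assert (He0 : 0 < e0) by (unfold e0; unfold Rdiv; apply Rmult_lt_0_compat; [lra|apply Rinv_0_lt_compat; nra]).
 destruct (Hn_sq_small e0 He0) as [M HM].
 destruct (HnInf (Nat.max (Nat.max N0 M) 1)) as [K2 HK2].
 exists (Nat.max (Nat.max K1 K2) (Nat.max K3 K4)). intros k Hk.
 specialize (HK1 k ltac:(lia)). specialize (HK2 k ltac:(lia)). specialize (HK3 k ltac:(lia)). specialize (HK4 k ltac:(lia)).
 unfold Rdist in *. rewrite Rminus_0_r in HK4.
 set (nk := n k) in *. set (mk := mu k) in *. set (mmk := m k) in *.
 pose proof (Hmu k) as Hmuk. fold mk in Hmuk.
 rewrite (expected_stat_eq a nk mk mmk (u k)) by auto.
 change (Viter mk 1 (nk - 1) (fdir a nk) 0%nat) with (pp a nk mk).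
 assert (Hnk : (1 <= nk)%nat) by lia.
 assert (HnR : 0 < INR nk) by (apply lt_0_INR; lia).
 assert (Hq : Hn nk ^ 2 / INR nk <= e0) by (apply HM; lia).
 assert (Hq0 : 0 <= Hn nk ^ 2 / INR nk) by (unfold Rdiv; apply Rmult_le_pos; [nra|left; apply Rinv_0_lt_compat; lra]).
 set (q := Hn nk ^ 2 / INR nk) in *.
 set (z := INR nk * mk) in *.
 assert (Hz : 0 <= z <= B). { split. unfold z; apply Rmult_le_pos; lra. rewrite abs_bnd in HK3 || (apply Rlt_le in HK3; rewrite abs_bnd in HK3). unfold B. lra. }
 assert (HKK : KK nk mk <= rho).
 { unfold KK. replace (mk * Hn nk ^ 2) with (z * q) by (unfold z, q; field; lra).
   replace (INR nk * mk ^ 2 * Hn nk ^ 2) with (z^2 * q) by (unfold z, q; field; lra).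
   assert (mk < rho / 3) by (rewrite Rabs_right in HK4; lra).
   assert (z * q <= B * e0) by (apply Rmult_le_compat; lra).
   assert (z^2 * q <= B^2 * e0) by (apply Rmult_le_compat; try nra; apply pow_incr; lra).
   assert ((B + B^2) * e0 = rho / 3) by (unfold e0; field; nra).
   nra. }
 specialize (Hmain nk mk ltac:(lia) Hmuk HKK).
 fold c in Hmain.
 set (p := pp a nk mk) in *.
 apply Rlt_le in HK1. rewrite abs_bnd in HK1.
 assert (He2' : e2 <= eps / (4 * c + 4)) by apply Rmin_r.
 assert (He21 : e2 <= 1) by apply Rmin_l.
 assert (Hmm : 0 <= INR mmk * mk) by (apply Rmult_le_pos; [apply pos_INR|lra]).
 replace (INR mmk * p - 2 * eta * c) with (INR mmk * (p - 2 * c * mk) + 2 * c * (INR mmk * mk - eta)) by ring.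
 eapply Rle_lt_trans. apply Rabs_triang.
 rewrite (Rabs_mult (INR mmk)). rewrite (Rabs_right (INR mmk)) by (apply Rle_ge, pos_INR).
 replace (Rabs (2 * c * (INR mmk * mk - eta))) with (2 * c * Rabs (INR mmk * mk - eta)) by (rewrite Rabs_mult, (Rabs_right (2 * c)) by lra; ring).
 assert (INR mmk * Rabs (p - 2 * c * mk) <= (eta + 1) * e1).
 { apply Rle_trans with (INR mmk * (e1 * mk)). apply Rmult_le_compat_l; [apply pos_INR|auto].
   replace (INR mmk * (e1 * mk)) with ((INR mmk * mk) * e1) by ring. apply Rmult_le_compat_r; lra. }
 assert ((eta + 1) * e1 = eps / 2) by (unfold e1; field; lra).
 assert (2 * c * Rabs (INR mmk * mk - eta) <= 2 * c * e2).
 { apply Rmult_le_compat_l. lra. rewrite abs_bnd; lra. }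
 assert (2 * c * e2 < eps / 2).
 { assert (2 * c * e2 <= 2 * c * (eps / (4 * c + 4))) by (apply Rmult_le_compat_l; lra).
   assert (2 * c * (eps / (4 * c + 4)) < eps / 2).
   { apply Rmult_lt_reg_r with (4 * c + 4). lra. unfold Rdiv. rewrite !Rmult_assoc, Rinv_l by lra. nra. }
   lra. }
 lra.
Qed.
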